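(* Let $n\ge4$. Every folded ribbon $n$-stick unknot $\mathcal{U}_{w,F}$ whose diagram $\mathcal{U}$ is a non-degenerate $n$-gon with all fold (interior) angles $\alpha_i$ satisfying $\frac{\pi}{2}\le\alpha_i<\pi$ has $\operatorname{Rib}(\mathcal{U}_{w,F})\ge n\cot(\frac{\pi}{n})$. Thus the minimum folded ribbonlength of such unknots is bounded below by $n\cot(\frac{\pi}{n})$, and the minimum occurs when $\mathcal{U}$ is a regular $n$-gon.
   Context: Non-degenerate $n$-gon: side lengths nonzero, interior angles not equal to $\pi$. For width $w>0$, the folded ribbon $\mathcal{U}_{w,F}$ is a flat strip of width $w$ centred on $\mathcal{U}$ (boundary parallel to and at distance $w/2$ from each edge), folded at each vertex along a fold line through the vertex perpendicular to the bisector of the angle there; it is a piecewise-linear immersion of an annulus or Möbius band into the plane whose only singularities are the pairwise disjoint fold lines, with consistent crossing information; $F$ is the folding information (which layer lies on top at each fold). The folded ribbonlength is $\operatorname{Rib}(\mathcal{U}_{w,F})=\operatorname{Len}(\mathcal{U})/w$. *)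

(* Defs.v *)
From Stdlib Require Import Reals List Arith.
Open Scope R_scope.

Definition pt : Type := (R * R)%type.

Definition vadd (p q : pt) : pt := (fst p + fst q, snd p + snd q).
Definition vsub (p q : pt) : pt := (fst p - fst q, snd p - snd q).
Definition vscale (c : R) (p : pt) : pt := (c * fst p, c * snd p).
Definition dot (p q : pt) : R := fst p * fst q + snd p * snd q.
Definition cross (p q : pt) : R := fst p * snd q - snd p * fst q.
Definition vnorm (p : pt) : R := sqrt (dot p p).
Definition unitv (p : pt) : pt := vscale (/ vnorm p) p.

(* A closed polygon with n vertices v 0, ..., v (n-1); indices taken mod n. *)
Definition vtx (n : nat) (v : nat -> pt) (i : nat) : pt := v (i mod n).
Definition nxt (n : nat) (v : nat -> pt) (i : nat) : pt := vtx n v (S i).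
Definition prv (n : nat) (v : nat -> pt) (i : nat) : pt := vtx n v (i + n - 1).

(* Non-degenerate: side lengths nonzero, interior angles not equal to pi.
   The angle condition is expressed as: the two incident edges at each
   vertex are not collinear (cross product nonzero). *)
Definition nondegenerate (n : nat) (v : nat -> pt) : Prop :=
  forall i, (i < n)%nat ->
    nxt n v i <> vtx n v i /\
    cross (vsub (vtx n v i) (prv n v i)) (vsub (nxt n v i) (vtx n v i)) <> 0.

(* Strictly convex polygon (either orientation): every vertex not on edge i
   lies strictly on the same side of the line through edge i. *)
Definition convex_polygon (n : nat) (v : nat -> pt) : Prop :=
  exists s : R, (s = 1 \/ s = -1) /\
    forall i j, (i < n)%nat -> (j < n)%nat -> j <> i -> j <> (S i mod n)%nat ->
      s * cross (vsub (nxt n v i) (vtx n v i)) (vsub (v j) (vtx n v i)) > 0.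

Definition int_angle (n : nat) (v : nat -> pt) (i : nat) : R :=
  let a := vsub (prv n v i) (vtx n v i) in
  let b := vsub (nxt n v i) (vtx n v i) in
  acos (dot a b / (vnorm a * vnorm b)).

(* Fold line at vertex i for width w: the segment through vertex i,
   perpendicular to the angle bisector (direction unit(b) - unit(a)),
   cut out by the ribbon of width w, i.e. of total length w / cos(alpha_i/2). *)
Definition fold_dir (n : nat) (v : nat -> pt) (i : nat) : pt :=
  let a := vsub (prv n v i) (vtx n v i) in
  let b := vsub (nxt n v i) (vtx n v i) in
  unitv (vsub (unitv b) (unitv a)).

Definition fold_half (n : nat) (v : nat -> pt) (w : R) (i : nat) : R :=
  w / (2 * cos (int_angle n v i / 2)).

Definition on_fold_line (n : nat) (v : nat -> pt) (w : R) (i : nat) (p : pt) : Prop :=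
  exists t : R, -1 <= t <= 1 /\
    p = vadd (vtx n v i) (vscale (t * fold_half n v w i) (fold_dir n v i)).

(* The folded ribbon U_{w,F} exists: fold lines pairwise disjoint. *)
Definition folds_disjoint (n : nat) (v : nat -> pt) (w : R) : Prop :=
  forall i j, (i < n)%nat -> (j < n)%nat -> i <> j ->
    forall p, on_fold_line n v w i p -> on_fold_line n v w j p -> False.

Definition folded_ribbon (n : nat) (v : nat -> pt) (w : R) : Prop :=
  0 < w /\ folds_disjoint n v w.

Definition poly_len (n : nat) (v : nat -> pt) : R :=
  fold_right Rplus 0 (map (fun i => vnorm (vsub (nxt n v i) (vtx n v i))) (seq 0 n)).

Definition ribbonlength (n : nat) (v : nat -> pt) (w : R) : R := poly_len n v / w.

Definition regular_polygon (n : nat) (v : nat -> pt) : Prop :=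
  nondegenerate n v /\ convex_polygon n v /\
  (forall i j, (i < n)%nat -> (j < n)%nat ->
     vnorm (vsub (nxt n v i) (vtx n v i)) = vnorm (vsub (nxt n v j) (vtx n v j)) /\
     int_angle n v i = int_angle n v j).

(* Main.v *)
Require Import Defs.
From Stdlib Require Import Reals List Arith Lra Lia Psatz.
Open Scope R_scope.


Lemma dot_nonneg p : 0 <= dot p p.
Proof. destruct p as [x y]; unfold dot; simpl; nra. Qed.

Lemma dot_pos p : p <> (0,0) -> 0 < dot p p.
Proof.
  destruct p as [x y]; unfold dot; simpl; intros H.
  destruct (Req_dec x 0) as [->|Hx]; destruct (Req_dec y 0) as [->|Hy];
  try (exfalso; apply H; reflexivity); nra.
Qed.

Lemma vnorm_sq p : vnorm p * vnorm p = dot p p.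
Proof. unfold vnorm; apply sqrt_sqrt, dot_nonneg. Qed.

Lemma vnorm_nonneg p : 0 <= vnorm p.
Proof. unfold vnorm; apply sqrt_pos. Qed.

Lemma vnorm_pos p : p <> (0,0) -> 0 < vnorm p.
Proof. intros H; unfold vnorm; apply sqrt_lt_R0, dot_pos, H. Qed.

Lemma lagrange a b : dot a b * dot a b + cross a b * cross a b = dot a a * dot b b.
Proof. destruct a, b; unfold dot, cross; simpl; ring. Qed.

Definition vopp (p : pt) : pt := (- fst p, - snd p).

Definition ang (a b : pt) : R := acos (dot a b / (vnorm a * vnorm b)).

Lemma sq_eq_nonneg x y : 0 <= x -> 0 <= y -> x * x = y * y -> x = y.
Proof. intros; nra. Qed.

Lemma ang_cos a b : a <> (0,0) -> b <> (0,0) ->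
  cos (ang a b) * (vnorm a * vnorm b) = dot a b.
Proof.
  intros Ha Hb. pose proof (vnorm_pos a Ha). pose proof (vnorm_pos b Hb).
  pose proof (vnorm_sq a); pose proof (vnorm_sq b).
  pose proof (lagrange a b).
  assert (Hab : 0 < vnorm a * vnorm b) by nra.
  unfold ang. rewrite cos_acos.
  - field. lra.
  - assert (Hsq: dot a b * dot a b <= (vnorm a * vnorm b) * (vnorm a * vnorm b)) by nra.
    assert (Hl: - (vnorm a * vnorm b) <= dot a b <= vnorm a * vnorm b) by nra.
    split.
    + apply (Rmult_le_reg_r (vnorm a * vnorm b)); auto.
      unfold Rdiv; rewrite Rmult_assoc, Rinv_l by lra. lra.
    + apply (Rmult_le_reg_r (vnorm a * vnorm b)); auto.
      unfold Rdiv; rewrite Rmult_assoc, Rinv_l by lra. lra.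
Qed.

Lemma ang_bound a b : 0 <= ang a b <= PI.
Proof. apply acos_bound. Qed.

Lemma ang_sin a b : a <> (0,0) -> b <> (0,0) ->
  sin (ang a b) * (vnorm a * vnorm b) = Rabs (cross a b).
Proof.
  intros Ha Hb. pose proof (ang_cos a b Ha Hb) as Hc.
  pose proof (vnorm_pos a Ha). pose proof (vnorm_pos b Hb).
  pose proof (vnorm_sq a); pose proof (vnorm_sq b).
  pose proof (lagrange a b).
  pose proof (ang_bound a b).
  assert (Hs : 0 <= sin (ang a b)) by (apply sin_ge_0; lra).
  pose proof (sin2_cos2 (ang a b)) as Hsc. unfold Rsqr in Hsc.
  apply sq_eq_nonneg.
  - apply Rmult_le_pos; nra.
  - apply Rabs_pos.
  - rewrite <- Rabs_mult, Rabs_pos_eq by nra.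
    set (s := sin (ang a b)) in *. set (c := cos (ang a b)) in *.
    assert (H6 : s * s = 1 - c * c) by lra.
    replace (s * (vnorm a * vnorm b) * (s * (vnorm a * vnorm b))) with
      ((s * s) * ((vnorm a * vnorm a) * (vnorm b * vnorm b))) by ring.
    rewrite H6, H1, H2.
    replace ((1 - c * c) * (dot a a * dot b b)) with
      (dot a a * dot b b - (c * (vnorm a * vnorm b)) * (c * (vnorm a * vnorm b))) by (rewrite <- H1, <- H2; ring).
    rewrite Hc. lra.
Qed.

Lemma vnorm_opp a : vnorm (vopp a) = vnorm a.
Proof. unfold vnorm, vopp, dot; destruct a; simpl; f_equal; ring. Qed.

Lemma ang_sym a b : ang a b = ang b a.
Proof. unfold ang, dot; destruct a, b; simpl; f_equal; f_equal; ring. Qed.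

Lemma ang_oppl a b : ang (vopp a) b = PI - ang a b.
Proof.
  unfold ang. rewrite vnorm_opp. rewrite <- acos_opp. f_equal.
  unfold dot, vopp; destruct a, b; simpl. unfold Rdiv. ring.
Qed.

Lemma ang_oppr a b : ang a (vopp b) = PI - ang a b.
Proof. rewrite ang_sym, ang_oppl, ang_sym. reflexivity. Qed.

Lemma ang_self a : a <> (0,0) -> ang a a = 0.
Proof.
  intros Ha. unfold ang. rewrite vnorm_sq. rewrite Rdiv_diag. apply acos_1.
  pose proof (dot_pos a Ha). lra.
Qed.

Lemma ang_add (sg : R) a b c : sg = 1 \/ sg = -1 ->
  a <> (0,0) -> b <> (0,0) -> c <> (0,0) ->
  0 <= sg * cross a c -> 0 <= sg * cross c b -> 0 <= sg * cross a b ->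
  (0 < sg * cross a c \/ 0 < sg * cross c b) ->
  ang a c + ang c b = ang a b.
Proof.
  intros Hsg Ha Hb Hc H1 H2 H3 H4.
  assert (Habs : forall x, 0 <= sg * x -> Rabs x = sg * x).
  { intros x Hx. destruct Hsg as [-> | ->].
    - rewrite Rabs_pos_eq; lra.
    - rewrite Rabs_left1; lra. }
  pose proof (vnorm_pos a Ha) as Na. pose proof (vnorm_pos b Hb) as Nb.
  pose proof (vnorm_pos c Hc) as Nc.
  pose proof (ang_cos a c Ha Hc) as Cx. pose proof (ang_sin a c Ha Hc) as Sx.
  pose proof (ang_cos c b Hc Hb) as Cy. pose proof (ang_sin c b Hc Hb) as Sy.
  rewrite Habs in Sx, Sy by auto.
  pose proof (ang_bound a c) as Bx. pose proof (ang_bound c b) as By.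
  set (x := ang a c) in *. set (y := ang c b) in *.
  assert (Hsg2 : sg * sg = 1) by (destruct Hsg as [-> | ->]; lra).
  assert (E1 : dot a c * dot c b - cross a c * cross c b = dot c c * dot a b)
    by (destruct a, b, c; unfold dot, cross; simpl; ring).
  assert (E2 : cross a c * dot c b + dot a c * cross c b = dot c c * cross a b)
    by (destruct a, b, c; unfold dot, cross; simpl; ring).
  rewrite <- vnorm_sq in E1, E2.
  assert (Kpos : 0 < vnorm a * vnorm b * (vnorm c * vnorm c)) by (apply Rmult_lt_0_compat; nra).
  assert (Ccos : cos (x + y) * (vnorm a * vnorm b) = dot a b).
  { apply (Rmult_eq_reg_r (vnorm c * vnorm c)); [|nra].
    rewrite cos_plus.
    replace ((cos x * cos y - sin x * sin y) * (vnorm a * vnorm b) * (vnorm c * vnorm c))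
      with ((cos x * (vnorm a * vnorm c)) * (cos y * (vnorm c * vnorm b))
            - (sin x * (vnorm a * vnorm c)) * (sin y * (vnorm c * vnorm b))) by ring.
    rewrite Cx, Cy, Sx, Sy.
    assert (Eq : sg * cross a c * (sg * cross c b) = cross a c * cross c b).
    { transitivity (sg * sg * (cross a c * cross c b)); [ring | rewrite Hsg2; ring]. }
    rewrite Eq, E1. ring. }
  assert (Csin : sin (x + y) * (vnorm a * vnorm b) = sg * cross a b).
  { apply (Rmult_eq_reg_r (vnorm c * vnorm c)); [|nra].
    rewrite sin_plus.
    replace ((sin x * cos y + cos x * sin y) * (vnorm a * vnorm b) * (vnorm c * vnorm c))
      with ((sin x * (vnorm a * vnorm c)) * (cos y * (vnorm c * vnorm b))
            + (cos x * (vnorm a * vnorm c)) * (sin y * (vnorm c * vnorm b))) by ring.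
    rewrite Cx, Cy, Sx, Sy.
    replace (sg * cross a b * (vnorm c * vnorm c)) with (sg * (vnorm c * vnorm c * cross a b)) by ring.
    rewrite <- E2. ring. }
  assert (Hlt : x + y < 2 * PI).
  { destruct H4 as [H4|H4].
    - assert (x < PI); [|lra].
      destruct (Req_dec x PI) as [E|E]; [|lra].
      rewrite E, sin_PI in Sx. nra.
    - assert (y < PI); [|lra].
      destruct (Req_dec y PI) as [E|E]; [|lra].
      rewrite E, sin_PI in Sy. nra. }
  assert (Hle : x + y <= PI).
  { destruct (Rle_dec (x + y) PI) as [h|h]; auto.
    assert (sin (x + y) < 0) by (apply sin_lt_0; lra).
    assert (0 <= sin (x + y) * (vnorm a * vnorm b)) by (rewrite Csin; lra).
    nra. }
  unfold ang.
  replace (dot a b / (vnorm a * vnorm b)) with (cos (x + y)).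
  - symmetry; apply acos_cos. lra.
  - rewrite <- Ccos. field. lra.
Qed.


Fixpoint sumn (f : nat -> R) (N : nat) : R :=
  match N with O => 0 | S k => sumn f k + f k end.

Lemma sumn_head f N : sumn f (S N) = f O + sumn (fun k => f (S k)) N.
Proof. induction N; simpl in *; [ring|]. rewrite IHN. ring. Qed.



Lemma sumn_ext f g N : (forall k, (k < N)%nat -> f k = g k) -> sumn f N = sumn g N.
Proof. induction N; intros H; simpl; [reflexivity|]. rewrite IHN by (intros; apply H; lia). rewrite H by lia. reflexivity. Qed.

Lemma fold_seq f a N :
  fold_right Rplus 0 (map f (seq a N)) = sumn (fun k => f (a + k)%nat) N.
Proof.
  revert a; induction N; intros a; [reflexivity|].
  simpl seq. simpl map. simpl fold_right. rewrite IHN, sumn_head.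
  rewrite Nat.add_0_r. f_equal. apply sumn_ext. intros k _. f_equal. lia.
Qed.

Lemma sumn_add f g N : sumn (fun k => f k + g k) N = sumn f N + sumn g N.
Proof. induction N; simpl; [ring|]. rewrite IHN. ring. Qed.

Lemma sumn_scal c f N : sumn (fun k => c * f k) N = c * sumn f N.
Proof. induction N; simpl; [ring|]. rewrite IHN. ring. Qed.

Lemma sumn_const c N : sumn (fun _ => c) N = INR N * c.
Proof. induction N; simpl sumn; [simpl; ring|]. rewrite IHN, S_INR. ring. Qed.

Lemma sumn_le f g N : (forall k, (k < N)%nat -> f k <= g k) -> sumn f N <= sumn g N.
Proof. induction N; intros H; simpl; [lra|]. pose proof (H N ltac:(lia)). pose proof (IHN ltac:(intros; apply H; lia)). lra. Qed.

Lemma sumn_lt f g N : (0 < N)%nat -> (forall k, (k < N)%nat -> f k < g k) -> sumn f N < sumn g N.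
Proof.
  destruct N; intros HN H; [lia|]. simpl.
  pose proof (H N ltac:(lia)). pose proof (sumn_le f g N ltac:(intros; apply Rlt_le, H; lia)). lra.
Qed.

Lemma sumn_split f a b : sumn f (a + b) = sumn f a + sumn (fun t => f (a + t)%nat) b.
Proof. induction b; simpl; [rewrite Nat.add_0_r; ring|]. rewrite Nat.add_succ_r. simpl. rewrite IHb. ring. Qed.

Lemma sumn_cyc f n : (0 < n)%nat -> sumn (fun i => f (S i mod n)%nat) n = sumn f n.
Proof.
  intros Hn. destruct n as [|m]; [lia|].
  rewrite (sumn_head f m).
  change (sumn (fun i => f (S i mod S m)%nat) (S m)) with
    (sumn (fun i => f (S i mod S m)%nat) m + f (S m mod S m)%nat).
  replace (S m mod S m)%nat with 0%nat by (symmetry; apply Nat.Div0.mod_same).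
  rewrite (sumn_ext _ (fun k => f (S k)) m). { ring. }
  intros k Hk. rewrite Nat.mod_small by lia. reflexivity.
Qed.

Lemma mod_cases a n : (a < 2 * n)%nat ->
  ((a < n)%nat /\ a mod n = a) \/ ((n <= a)%nat /\ a mod n = (a - n)%nat).
Proof.
  intros H. destruct (Nat.lt_ge_cases a n) as [h|h].
  - left. split; auto. apply Nat.mod_small; auto.
  - right. split; auto.
    replace a with ((a - n) + 1 * n)%nat at 1 by lia.
    rewrite Nat.Div0.mod_add. apply Nat.mod_small. lia.
Qed.


Definition V n v i := vtx n v i.
Definition D n v i := vsub (V n v (S i)) (V n v i).

Lemma V_mod n v i : V n v (i mod n) = V n v i.
Proof. unfold V, vtx. rewrite Nat.Div0.mod_mod. reflexivity. Qed.

Lemma V_add_n n v i : V n v (i + n) = V n v i.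
Proof. unfold V, vtx. replace (i + n)%nat with (i + 1 * n)%nat by lia. rewrite Nat.Div0.mod_add. reflexivity. Qed.

Lemma S_mod i n : (S (i mod n)) mod n = (S i) mod n.
Proof. replace (S (i mod n)) with (i mod n + 1)%nat by lia. rewrite Nat.Div0.add_mod_idemp_l. f_equal. lia. Qed.

Lemma D_mod n v i : D n v (i mod n) = D n v i.
Proof. unfold D. rewrite V_mod. rewrite <- (V_mod n v (S (i mod n))), S_mod, V_mod. reflexivity. Qed.

Lemma D_add_n n v i : D n v (i + n) = D n v i.
Proof. unfold D. rewrite V_add_n. replace (S (i + n)) with (S i + n)%nat by lia. rewrite V_add_n. reflexivity. Qed.

Lemma V_small n v j : (j < n)%nat -> V n v j = v j.
Proof. intros; unfold V, vtx; rewrite Nat.mod_small; auto. Qed.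

Definition cvx n v sg := (sg = 1 \/ sg = -1) /\
  forall i j, (i < n)%nat -> (j < n)%nat -> j <> i -> j <> (S i mod n)%nat ->
    sg * cross (D n v i) (vsub (V n v j) (V n v i)) > 0.

Lemma convex_cvx n v : convex_polygon n v -> exists sg, cvx n v sg.
Proof.
  intros [sg [Hs H]]. exists sg. split; auto. intros i j Hi Hj H1 H2.
  unfold D. rewrite (V_small n v j Hj). apply H; auto.
Qed.

Lemma vsub_neq p q : p <> q -> vsub p q <> (0,0).
Proof.
  destruct p as [a b], q as [c d]. unfold vsub; simpl. intros H E. apply H.
  injection E; intros; f_equal; lra.
Qed.

Lemma nondeg_D n v : (0 < n)%nat -> nondegenerate n v -> forall i, D n v i <> (0,0).
Proof.
  intros Hn Hnd i. rewrite <- D_mod. apply vsub_neq.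
  destruct (Hnd (i mod n)%nat) as [H _]. { apply Nat.mod_upper_bound; lia. }
  exact H.
Qed.

Lemma cross_sub_r a b c : cross a (vsub b c) = cross a b - cross a c.
Proof. destruct a, b, c; unfold cross, vsub; simpl; ring. Qed.
Lemma cross_self a : cross a a = 0.
Proof. destruct a; unfold cross; simpl; ring. Qed.

Lemma cvx_gen n v sg : (0 < n)%nat -> cvx n v sg -> forall i j,
  (j mod n <> i mod n)%nat -> (j mod n <> S i mod n)%nat ->
  sg * cross (D n v i) (vsub (V n v j) (V n v i)) > 0.
Proof.
  intros Hn [_ H] i j H1 H2.
  rewrite <- D_mod, <- (V_mod n v j), <- (V_mod n v i).
  apply H; try (apply Nat.mod_upper_bound; lia); auto.
  rewrite S_mod. auto.
Qed.

Lemma consec n v sg : (3 <= n)%nat -> cvx n v sg -> forall i,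
  sg * cross (D n v i) (D n v (S i)) > 0.
Proof.
  intros Hn Hc i.
  assert (E : cross (D n v i) (D n v (S i)) = cross (D n v i) (vsub (V n v (S (S i))) (V n v i))).
  { unfold D at 2. rewrite !cross_sub_r.
    assert (cross (D n v i) (V n v (S i)) = cross (D n v i) (V n v i)); [|lra].
    pose proof (cross_self (D n v i)) as Z. unfold D at 2 in Z. rewrite cross_sub_r in Z. lra. }
  rewrite E. apply cvx_gen; auto; [lia| |].
  - replace (S (S i)) with (i mod n + 2 + (i / n) * n)%nat.
    2:{ pose proof (Nat.div_mod_eq i n). lia. }
    rewrite !Nat.Div0.mod_add.
    pose proof (Nat.mod_upper_bound i n ltac:(lia)).
    destruct (mod_cases (i mod n + 2) n ltac:(lia)) as [[h1 h2]|[h1 h2]]; lia.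
  - replace (S (S i)) with (i mod n + 2 + (i / n) * n)%nat.
    2:{ pose proof (Nat.div_mod_eq i n). lia. }
    replace (S i) with (i mod n + 1 + (i / n) * n)%nat.
    2:{ pose proof (Nat.div_mod_eq i n). lia. }
    rewrite !Nat.Div0.mod_add.
    pose proof (Nat.mod_upper_bound i n ltac:(lia)).
    destruct (mod_cases (i mod n + 2) n ltac:(lia)) as [[h1 h2]|[h1 h2]];
    destruct (mod_cases (i mod n + 1) n ltac:(lia)) as [[h3 h4]|[h3 h4]]; lia.
Qed.


Lemma cross_sub_l a b c : cross (vsub a b) c = cross a c - cross b c.
Proof. destruct a, b, c; unfold cross, vsub; simpl; ring. Qed.

Lemma chain n v sg r : (3 <= n)%nat -> cvx n v sg -> (forall i, D n v i <> (0,0)) -> r <> (0,0) ->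
  forall k0 d, (forall t, (t <= d)%nat -> 0 <= sg * cross r (D n v (k0 + t))) ->
  ang r (D n v k0) + sumn (fun t => ang (D n v (k0 + t)) (D n v (S (k0 + t)))) d = ang r (D n v (k0 + d)).
Proof.
  intros Hn Hc HD Hr k0 d. induction d; intros H.
  - simpl. rewrite Nat.add_0_r. ring.
  - simpl sumn. rewrite <- Rplus_assoc, IHd by (intros; apply H; lia).
    replace (k0 + S d)%nat with (S (k0 + d)) by lia.
    pose proof (consec n v sg Hn Hc (k0 + d)).
    apply ang_add with sg; [destruct Hc; auto | auto | auto | auto | apply H; lia | lra | | right; lra].
    replace (S (k0 + d)) with (k0 + S d)%nat by lia. apply H; lia.
Qed.

Lemma vopp_vopp a : vopp (vopp a) = a.
Proof. destruct a; unfold vopp; simpl; f_equal; ring. Qed.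

Lemma cross_opp_l a b : cross (vopp a) b = - cross a b.
Proof. destruct a, b; unfold cross, vopp; simpl; ring. Qed.

Lemma cross_opp_r a b : cross a (vopp b) = - cross a b.
Proof. destruct a, b; unfold cross, vopp; simpl; ring. Qed.
Lemma cross_anti a b : cross a b = - cross b a.
Proof. destruct a, b; unfold cross; simpl; ring. Qed.

Lemma vopp_neq a : a <> (0,0) -> vopp a <> (0,0).
Proof. destruct a as [x y]; unfold vopp; simpl; intros H E; apply H; injection E; intros; f_equal; lra. Qed.

Lemma turning n v sg : (3 <= n)%nat -> cvx n v sg -> (forall i, D n v i <> (0,0)) ->
  sumn (fun i => ang (D n v (i + n - 1)) (D n v i)) n = 2 * PI.
Proof.
  intros Hn Hc HD.
  assert (Hsg : sg = 1 \/ sg = -1) by (destruct Hc; auto).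
  assert (Hsg2 : sg * sg = 1) by (destruct Hsg as [-> | ->]; lra).
  set (h := fun j => sg * cross (D n v 0) (vsub (V n v j) (V n v 0))).
  set (g := fun k => sg * cross (D n v 0) (D n v k)).
  assert (Hg : forall k, g k = h (S k) - h k).
  { intros k. unfold g, h. unfold D at 2. rewrite !cross_sub_r. ring. }
  assert (Hh : forall j, (2 <= j <= n - 1)%nat -> h j > 0).
  { intros j Hj. unfold h. apply cvx_gen; auto; [lia| |].
    - rewrite Nat.mod_small by lia. rewrite Nat.Div0.mod_0_l. lia.
    - rewrite !Nat.mod_small by lia. lia. }
  assert (Hh1 : h 1%nat = 0).
  { unfold h. change (vsub (V n v 1) (V n v 0)) with (D n v 0). rewrite cross_self. ring. }
  assert (Hhn : h n = 0).
  { unfold h. rewrite <- (V_add_n n v 0). simpl. unfold vsub. destruct (V n v 0).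
    simpl. unfold cross. simpl. ring. }
  assert (Hg1 : g 1%nat > 0) by (rewrite Hg, Hh1; pose proof (Hh 2%nat ltac:(lia)); lra).
  assert (Hgn : g (n - 1)%nat < 0).
  { rewrite Hg. replace (S (n - 1)) with n by lia. rewrite Hhn. pose proof (Hh (n - 1)%nat ltac:(lia)). lra. }
  assert (Nolm : forall k, (1 <= k <= n - 2)%nat -> g k <= 0 -> g (S k) < 0).
  { intros k Hk Hgk.
    set (A := D n v k). set (B := D n v (S k)). set (E := D n v 0).
    set (u := vsub (V n v 0) (V n v (S k))).
    assert (P1 : sg * cross A u > 0).
    { assert (cross A u = cross A (vsub (V n v 0) (V n v k))).
      { unfold u. rewrite !cross_sub_r. pose proof (cross_self A) as Z.
        unfold A at 2 in Z. unfold D in Z. rewrite cross_sub_r in Z. lra. }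
      rewrite H. apply cvx_gen; auto; [lia| |].
      - rewrite Nat.Div0.mod_0_l, Nat.mod_small; lia.
      - rewrite Nat.Div0.mod_0_l, Nat.mod_small; lia. }
    assert (P2 : sg * cross B u >= 0).
    { destruct (Nat.eq_dec (S k) (n - 1)) as [E1|E1].
      - assert (u = B).
        { unfold u, B, D. f_equal. rewrite <- (V_add_n n v 0). f_equal. lia. }
        rewrite H, cross_self. lra.
      - apply Rgt_ge. apply cvx_gen; auto; [lia| |].
        + rewrite Nat.Div0.mod_0_l, Nat.mod_small; lia.
        + rewrite Nat.Div0.mod_0_l, Nat.mod_small; lia. }
    assert (P3 : sg * cross A B > 0) by (apply consec; auto).
    assert (P4 : sg * cross E u < 0).
    { assert (sg * cross E u = - h (S k)).
      { unfold h, u, E. rewrite !cross_sub_r. ring. }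
      rewrite H. pose proof (Hh (S k) ltac:(lia)). lra. }
    assert (Id : cross A B * cross E u = cross A u * cross E B - cross B u * cross E A).
    { destruct A, B, E, u; unfold cross; simpl; ring. }
    assert (Id2 : (sg * cross A B) * (sg * cross E u) = (sg * cross A u) * g (S k) - (sg * cross B u) * g k).
    { unfold g. fold E. fold B. fold A.
      transitivity (sg * sg * (cross A B * cross E u)); [ring|].
      rewrite Id. ring. }
    destruct (Rlt_dec (g (S k)) 0) as [ok|nok]; auto.
    exfalso. assert (g (S k) >= 0) by lra. nra. }
  assert (Search : forall N, (forall k, (1 <= k <= N)%nat -> g k > 0) \/
     exists k0, (1 <= k0 <= N)%nat /\ g k0 <= 0 /\ forall k, (1 <= k < k0)%nat -> g k > 0).
  { induction N.
    - left. intros; lia.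
    - destruct IHN as [IH|[k0 [Hk0 [Hk1 Hk2]]]].
      + destruct (Rle_dec (g (S N)) 0) as [hle|hgt].
        * right. exists (S N). split; [|split]; auto.
          -- destruct N; [|lia]. exfalso. lra.
          -- intros k Hk. apply IH. lia.
        * left. intros k Hk. destruct (Nat.eq_dec k (S N)) as [->|]; [lra|]. apply IH; lia.
      + right. exists k0. split; [lia|]. auto. }
  destruct (Search (n - 1)%nat) as [Hall|[k0 [Hk0 [Hk1 Hk2]]]].
  { pose proof (Hall (n - 1)%nat ltac:(lia)). lra. }
  assert (Hk0' : (2 <= k0)%nat).
  { destruct (Nat.eq_dec k0 1) as [->|]; [lra|lia]. }
  set (m := (k0 - 1)%nat).
  assert (Gpos : forall k, (k <= m)%nat -> 0 <= g k).
  { intros k Hk. destruct k. { unfold g. rewrite cross_self. lra. } apply Rlt_le, Hk2. lia. }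
  assert (Gm : 0 < g m) by (apply Hk2; lia).
  assert (Gneg : forall d, (S m + d <= n - 1)%nat -> g (S m + d)%nat <= 0).
  { induction d; intros Hd.
    - rewrite Nat.add_0_r. unfold m. replace (S (k0 - 1)) with k0 by lia. auto.
    - apply Rlt_le. replace (S m + S d)%nat with (S (S m + d)) by lia.
      apply Nolm; [lia|]. apply IHd. lia. }
  set (e := vopp (D n v 0)).
  assert (He : e <> (0,0)) by (apply vopp_neq; auto).
  assert (Hhead : forall f N, (0 < N)%nat -> sumn f N = f 0%nat + sumn (fun k => f (S k)) (N - 1)).
  { intros f N HN; destruct N; [lia|]. rewrite sumn_head. simpl. rewrite Nat.sub_0_r. auto. }
  rewrite Hhead by lia.
  replace (0 + n - 1)%nat with (n - 1)%nat by lia.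
  rewrite (sumn_ext _ (fun k => ang (D n v k) (D n v (S k)))).
  2:{ intros k _. replace (S k + n - 1)%nat with (k + n)%nat by lia. rewrite D_add_n. reflexivity. }
  replace (n - 1)%nat with (m + S (n - 2 - m))%nat at 2 by lia.
  rewrite sumn_split. rewrite sumn_head.
  pose proof (chain n v sg (D n v 0) Hn Hc HD (HD 0%nat) 0%nat m) as C1.
  simpl in C1. rewrite ang_self in C1 by auto.
  assert (S1 : sumn (fun k : nat => ang (D n v k) (D n v (S k))) m = ang (D n v 0) (D n v m)).
  { rewrite <- C1 by (intros t Ht; apply Gpos; lia). ring. }
  rewrite S1. clear C1 S1.
  rewrite Nat.add_0_r.
  assert (T1 : ang (D n v m) (D n v (S m)) = ang (D n v m) e + ang e (D n v (S m))).
  { symmetry. apply ang_add with sg; auto.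
    - unfold e. rewrite cross_opp_r, (cross_anti (D n v m)). unfold g in Gm. lra.
    - unfold e. rewrite cross_opp_l. pose proof (Gneg 0%nat ltac:(lia)). rewrite Nat.add_0_r in H. unfold g in H. lra.
    - pose proof (consec n v sg Hn Hc m). lra.
    - left. unfold e. rewrite cross_opp_r, (cross_anti (D n v m)). unfold g in Gm. lra. }
  rewrite T1.
  pose proof (chain n v sg e Hn Hc HD He (S m) (n - 2 - m)%nat) as C2.
  rewrite (sumn_ext (fun t => ang (D n v (S m + t)) (D n v (S (S m + t))))
              (fun t => ang (D n v (m + S t)) (D n v (S (m + S t))))) in C2.
  2:{ intros k _. replace (S m + k)%nat with (m + S k)%nat by lia. reflexivity. }
  rewrite <- Rplus_assoc.
  rewrite (Rplus_assoc _ (ang e (D n v (S m)))).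
  rewrite C2.
  2:{ intros t Ht. unfold e. rewrite cross_opp_l. pose proof (Gneg t ltac:(lia)). unfold g in H. lra. }
  replace (S m + (n - 2 - m))%nat with (n - 1)%nat by lia.
  assert (F1 : ang (D n v (n - 1)) (D n v 0) = PI - ang e (D n v (n - 1))).
  { replace (D n v 0) with (vopp e) by (unfold e; apply vopp_vopp).
    rewrite ang_oppr, ang_sym. reflexivity. }
  assert (F2 : ang (D n v m) e = PI - ang (D n v 0) (D n v m)).
  { unfold e. rewrite ang_oppr, ang_sym. reflexivity. }
  rewrite F1, F2. ring.
Qed.


Definition nrm (sg : R) (U : pt) : pt := (sg * snd U, - sg * fst U).

Lemma fold_decomp (U A : pt) (sg x s c : R) :
  dot U U = 1 -> dot A A = 1 -> dot A U = x -> x < 1 -> sg * sg = 1 ->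
  dot A (nrm sg U) < 0 -> 0 <= s -> 0 <= c -> s * s = (1 - x) / 2 -> c * c = (1 + x) / 2 ->
  unitv (vsub U A) = vadd (vscale s U) (vscale c (nrm sg U)).
Proof.
  destruct U as [u1 u2], A as [a1 a2]. unfold dot, nrm, unitv, vsub, vadd, vscale, vnorm, dot; simpl.
  intros HU HA Hx Hx1 Hsg HAN Hs Hc Hs2 Hc2.
  set (q := sqrt ((u1 - a1) * (u1 - a1) + (u2 - a2) * (u2 - a2))).
  assert (Hq2 : q * q = 2 - 2 * x).
  { unfold q. rewrite sqrt_sqrt by nra. nra. }
  assert (Hq : 0 < q) by (unfold q; apply sqrt_lt_R0; nra).
  assert (E1 : s * q = 1 - x).
  { apply sq_eq_nonneg; [nra|lra|].
    transitivity ((s * s) * (q * q)); [ring|]. rewrite Hs2, Hq2. field. }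
  assert (E2 : c * q = - (a1 * (sg * u2) + a2 * (- sg * u1))).
  { apply sq_eq_nonneg; [nra|lra|].
    transitivity ((c * c) * (q * q)); [ring|]. rewrite Hc2, Hq2.
    assert (L : (a1 * u1 + a2 * u2) * (a1 * u1 + a2 * u2) + (a1 * u2 - a2 * u1) * (a1 * u2 - a2 * u1) = 1).
    { transitivity ((a1 * a1 + a2 * a2) * (u1 * u1 + u2 * u2)); [ring|]. rewrite HA, HU. ring. }
    rewrite <- Hx.
    transitivity (sg * sg * ((a1 * u2 - a2 * u1) * (a1 * u2 - a2 * u1))).
    2:{ ring. }
    rewrite Hsg. lra. }
  f_equal.
  - apply (Rmult_eq_reg_r q); [|lra].
    transitivity (u1 - a1); [field; lra|].
    transitivity ((s * q) * u1 + (c * q) * (sg * u2)); [|ring].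
    rewrite E1, E2, <- Hx.
    transitivity (u1 - a1 * (u1*u1+u2*u2) + (1 - sg*sg) * (a1*u2*u2 - a2*u1*u2)).
    { rewrite HU, Hsg. ring. }
    ring.
  - apply (Rmult_eq_reg_r q); [|lra].
    transitivity (u2 - a2); [field; lra|].
    transitivity ((s * q) * u2 + (c * q) * (- sg * u1)); [|ring].
    rewrite E1, E2, <- Hx.
    transitivity (u2 - a2 * (u1*u1+u2*u2) + (1 - sg*sg) * (a2*u1*u1 - a1*u1*u2)).
    { rewrite HU, Hsg. ring. }
    ring.
Qed.


Definition M n v sg a := nrm sg (D n v a).

Lemma dot_nrm w sg d : dot w (nrm sg d) = - sg * cross d w.
Proof. destruct w, d; unfold dot, nrm, cross; simpl; ring. Qed.

Lemma Smod_inj x y n : (0 < n)%nat -> (S x mod n = S y mod n)%nat -> (x mod n = y mod n)%nat.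
Proof.
  intros Hn H.
  assert (K : forall z, (z mod n = ((S z mod n) + (n - 1)) mod n)%nat).
  { intros z. rewrite Nat.Div0.add_mod_idemp_l. replace (S z + (n - 1))%nat with (z + 1 * n)%nat by lia.
    rewrite Nat.Div0.mod_add. reflexivity. }
  rewrite (K x), (K y), H. reflexivity.
Qed.

Lemma line_side n v sg : (3 <= n)%nat -> cvx n v sg -> forall a j,
  dot (vsub (V n v j) (V n v a)) (M n v sg a) <= 0 /\
  ((j mod n <> a mod n)%nat -> (j mod n <> S a mod n)%nat -> dot (vsub (V n v j) (V n v a)) (M n v sg a) < 0).
Proof.
  intros Hn Hc a j. unfold M. rewrite dot_nrm.
  split.
  - destruct (Nat.eq_dec (j mod n) (a mod n)) as [E|E].
    + rewrite <- (V_mod n v j), E, V_mod. unfold vsub. destruct (V n v a). simpl. unfold cross. simpl. lra.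
    + destruct (Nat.eq_dec (j mod n) (S a mod n)) as [E2|E2].
      * rewrite <- (V_mod n v j), E2, V_mod. change (vsub (V n v (S a)) (V n v a)) with (D n v a).
        rewrite cross_self. lra.
      * pose proof (cvx_gen n v sg ltac:(lia) Hc a j E E2). lra.
  - intros E E2. pose proof (cvx_gen n v sg ltac:(lia) Hc a j E E2). lra.
Qed.

Lemma sep_core La Lb C K Pa Pb rho rho' mu Xb Yb :
  0 < La -> 0 < Lb -> C * C + K * K = La * Lb ->
  rho * La - rho' * C = Pb -> rho' * Lb - rho * C = Pa -> Pa <= 0 ->
  Pb = (1 - mu) * Xb + mu * Yb -> Xb <= 0 -> Yb <= 0 -> 0 <= mu <= 1 ->
  0 < rho -> 0 <= rho' ->
  K = 0 /\ (1 - mu) * Xb = 0 /\ mu * Yb = 0.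
Proof.
  intros HLa HLb Lag E1 E2 HPa EPb HX HY Hmu Hr Hr'.
  assert (HPb : Pb <= 0) by nra.
  assert (H1 : rho' * C >= rho * La) by lra.
  assert (H2 : rho * C >= rho' * Lb) by lra.
  assert (HrL : rho * La > 0) by nra.
  assert (HC : C > 0) by nra.
  assert (H3 : rho * C * C >= rho * La * Lb).
  { assert (rho * C * C >= rho' * Lb * C) by nra. nra. }
  assert (H4 : C * C >= La * Lb) by nra.
  assert (HK : K * K <= 0) by lra.
  assert (HK0 : K = 0) by nra.
  assert (H5 : C * C = La * Lb) by nra.
  assert (H6 : rho' * C * Lb <= rho * La * Lb) by nra.
  assert (H7 : rho' * C <= rho * La).
  { apply (Rmult_le_reg_r Lb); auto. }
  assert (Pb = 0) by lra.
  split; auto. nra.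
Qed.

Lemma dot_self_nrm sg d : sg * sg = 1 -> dot (nrm sg d) (nrm sg d) = dot d d.
Proof. intros H; destruct d; unfold dot, nrm; simpl. transitivity ((sg*sg) * (r*r + r0*r0)); [ring|]. rewrite H; try ring. Qed.

Lemma lag_nrm sg d e : sg * sg = 1 ->
  dot (nrm sg d) (nrm sg e) * dot (nrm sg d) (nrm sg e) + cross d e * cross d e = dot d d * dot e e.
Proof.
  intros H. rewrite <- lagrange. destruct d, e; unfold dot, nrm, cross; simpl.
  transitivity ((sg*sg)*(sg*sg)*((r * r1 + r0 * r2) * (r * r1 + r0 * r2)) + (r * r2 - r0 * r1) * (r * r2 - r0 * r1)); [ring|].
  rewrite H. try ring.
Qed.

Lemma separation n v sg : (3 <= n)%nat -> cvx n v sg -> forall a b lam mu rho rho',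
  (a mod n <> b mod n)%nat -> 0 <= lam <= 1 -> 0 <= mu <= 1 -> 0 <= rho -> 0 <= rho' ->
  vadd (vadd (V n v a) (vscale lam (D n v a))) (vscale rho (M n v sg a)) =
  vadd (vadd (V n v b) (vscale mu (D n v b))) (vscale rho' (M n v sg b)) ->
  rho = 0.
Proof.
  intros Hn Hc a b lam mu rho rho' Hab Hl Hm Hr Hr' Heq.
  assert (Hsg : sg * sg = 1) by (destruct Hc as [[-> | ->] _]; lra).
  destruct (line_side n v sg Hn Hc a b) as [Xb Xbs].
  destruct (line_side n v sg Hn Hc a (S b)) as [Yb Ybs].
  destruct (line_side n v sg Hn Hc b a) as [Xa _].
  destruct (line_side n v sg Hn Hc b (S a)) as [Ya _].
  pose proof (consec n v sg Hn Hc a) as Ca. pose proof (consec n v sg Hn Hc b) as Cb.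
  assert (Da0 : 0 < dot (D n v a) (D n v a)).
  { apply dot_pos. intros E. rewrite E in Ca. unfold cross in Ca. simpl in Ca. lra. }
  assert (Db0 : 0 < dot (D n v b) (D n v b)).
  { apply dot_pos. intros E. rewrite E in Cb. unfold cross in Cb. simpl in Cb. lra. }
  destruct (Rle_lt_or_eq_dec 0 rho Hr) as [Hpos|]; [exfalso|auto].
  set (P := vadd (vadd (V n v a) (vscale lam (D n v a))) (vscale rho (M n v sg a))) in Heq.
  set (qa := vadd (V n v a) (vscale lam (D n v a))).
  set (qb := vadd (V n v b) (vscale mu (D n v b))).
  assert (Hqa : qa = vsub P (vscale rho (M n v sg a))).
  { unfold P, qa. destruct (V n v a), (D n v a), (M n v sg a). unfold vadd, vsub, vscale; simpl. f_equal; ring. }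
  assert (Hqb : qb = vsub P (vscale rho' (M n v sg b))).
  { rewrite Heq. unfold qb. destruct (V n v b), (D n v b), (M n v sg b). unfold vadd, vsub, vscale; simpl. f_equal; ring. }
  assert (EPb : dot (vsub qb qa) (M n v sg a) =
     (1 - mu) * dot (vsub (V n v b) (V n v a)) (M n v sg a) + mu * dot (vsub (V n v (S b)) (V n v a)) (M n v sg a)).
  { unfold qa, qb. assert (dot (D n v a) (M n v sg a) = 0).
    { unfold M. rewrite dot_nrm, cross_self. ring. }
    revert H. unfold D. destruct (V n v a), (V n v b), (V n v (S b)), (V n v (S a)), (M n v sg a).
    unfold vadd, vsub, vscale, dot; simpl. intros. nra. }
  assert (EPa : dot (vsub qa qb) (M n v sg b) =
     (1 - lam) * dot (vsub (V n v a) (V n v b)) (M n v sg b) + lam * dot (vsub (V n v (S a)) (V n v b)) (M n v sg b)).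
  { unfold qa, qb. assert (dot (D n v b) (M n v sg b) = 0).
    { unfold M. rewrite dot_nrm, cross_self. ring. }
    revert H. unfold D. destruct (V n v a), (V n v b), (V n v (S b)), (V n v (S a)), (M n v sg b).
    unfold vadd, vsub, vscale, dot; simpl. intros. nra. }
  assert (E1 : dot (vsub qb qa) (M n v sg a) = rho * dot (D n v a) (D n v a) - rho' * dot (M n v sg a) (M n v sg b)).
  { rewrite Hqa, Hqb. rewrite <- (dot_self_nrm sg (D n v a) Hsg). change (nrm sg (D n v a)) with (M n v sg a).
    destruct P, (M n v sg a), (M n v sg b). unfold vsub, vscale, dot; simpl. ring. }
  assert (E2 : dot (vsub qa qb) (M n v sg b) = rho' * dot (D n v b) (D n v b) - rho * dot (M n v sg a) (M n v sg b)).
  { rewrite Hqa, Hqb. rewrite <- (dot_self_nrm sg (D n v b) Hsg). change (nrm sg (D n v b)) with (M n v sg b).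
    destruct P, (M n v sg a), (M n v sg b). unfold vsub, vscale, dot; simpl. ring. }
  pose proof (lag_nrm sg (D n v a) (D n v b) Hsg) as Lag. change (nrm sg (D n v a)) with (M n v sg a) in Lag. change (nrm sg (D n v b)) with (M n v sg b) in Lag.
  assert (HPa : dot (vsub qa qb) (M n v sg b) <= 0) by (rewrite EPa; nra).
  destruct (sep_core _ _ _ _ _ _ rho rho' mu _ _ Da0 Db0 Lag (eq_sym E1) (eq_sym E2) HPa EPb Xb Yb Hm Hpos Hr')
    as [K0 [Z1 Z2]].
  assert (Hnm : (0 < n)%nat) by lia.
  assert (Kc : forall j, (S j mod n = S a mod n)%nat -> (j mod n = a mod n)%nat) by (intros; apply Smod_inj; auto).
  destruct (Rlt_le_dec mu 1) as [Hmu1|Hmu1].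
  -
    assert (Xb0 : dot (vsub (V n v b) (V n v a)) (M n v sg a) = 0).
    { assert (1 - mu <> 0) by lra. apply (Rmult_eq_reg_l (1 - mu)); auto. lra. }
    destruct (Nat.eq_dec (b mod n) (S a mod n)) as [E|E].
    + rewrite <- (D_mod n v b), E, D_mod in K0. rewrite K0 in Ca. lra.
    + assert (b mod n <> a mod n) by auto. pose proof (Xbs H E). lra.
  - assert (Yb0 : dot (vsub (V n v (S b)) (V n v a)) (M n v sg a) = 0).
    { assert (mu <> 0) by lra. apply (Rmult_eq_reg_l mu); auto. lra. }
    destruct (Nat.eq_dec (S b mod n) (a mod n)) as [E|E].
    + rewrite <- (D_mod n v a), <- E, D_mod in K0.
      rewrite cross_anti in K0. assert (cross (D n v b) (D n v (S b)) = 0) by lra.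
      rewrite H in Cb. lra.
    + destruct (Nat.eq_dec (S b mod n) (S a mod n)) as [E3|E3].
      * apply Hab. symmetry. apply Smod_inj; auto.
      * pose proof (Ybs E E3). lra.
Qed.



Lemma dot_vscale k l p q : dot (vscale k p) (vscale l q) = k * l * dot p q.
Proof. destruct p, q; unfold dot, vscale; simpl; ring. Qed.

Lemma unitv_unit p : p <> (0,0) -> dot (unitv p) (unitv p) = 1.
Proof.
  intros H. pose proof (vnorm_pos p H). pose proof (vnorm_sq p).
  unfold unitv. rewrite dot_vscale, <- H1. field. lra.
Qed.

Lemma dot_unitv a b : a <> (0,0) -> b <> (0,0) -> dot (unitv a) (unitv b) = dot a b / (vnorm a * vnorm b).
Proof.
  intros Ha Hb. pose proof (vnorm_pos a Ha). pose proof (vnorm_pos b Hb).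
  unfold unitv. rewrite dot_vscale. field. lra.
Qed.

Lemma unitv_vopp p : unitv (vopp p) = vopp (unitv p).
Proof. unfold unitv. rewrite vnorm_opp. destruct p; unfold vscale, vopp; simpl; f_equal; ring. Qed.

Lemma V_pred n v i : (0 < n)%nat -> vsub (V n v (i + n - 1)) (V n v i) = vopp (D n v (i + n - 1)).
Proof.
  intros Hn. unfold D. replace (S (i + n - 1)) with (i + n)%nat by lia. rewrite V_add_n.
  destruct (V n v (i + n - 1)), (V n v i); unfold vsub, vopp; simpl; f_equal; ring.
Qed.

Lemma D_pred_succ n v i : (0 < n)%nat -> D n v (S (i + n - 1)) = D n v i.
Proof. intros Hn. replace (S (i + n - 1)) with (i + n)%nat by lia. apply D_add_n. Qed.

Lemma int_angle_eq n v i : (0 < n)%nat ->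
  int_angle n v i = ang (vopp (D n v (i + n - 1))) (D n v i).
Proof.
  intros Hn. unfold int_angle, ang. cbv zeta. unfold prv, nxt.
  change (vtx n v (i + n - 1)) with (V n v (i + n - 1)).
  change (vtx n v i) with (V n v i). change (vtx n v (S i)) with (V n v (S i)).
  rewrite V_pred by auto. reflexivity.
Qed.

Lemma int_angle_ext n v i : (0 < n)%nat ->
  int_angle n v i = PI - ang (D n v (i + n - 1)) (D n v i).
Proof. intros Hn. rewrite int_angle_eq by auto. apply ang_oppl. Qed.

Lemma fold_dir_eq n v i : (0 < n)%nat ->
  fold_dir n v i = unitv (vsub (unitv (D n v i)) (unitv (vopp (D n v (i + n - 1))))).
Proof.
  intros Hn. unfold fold_dir. cbv zeta. unfold prv, nxt.
  change (vtx n v (i + n - 1)) with (V n v (i + n - 1)).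
  change (vtx n v i) with (V n v i). change (vtx n v (S i)) with (V n v (S i)).
  rewrite V_pred by auto. reflexivity.
Qed.

Lemma unitv_vsub_swap p q : unitv (vsub q p) = vopp (unitv (vsub p q)).
Proof.
  replace (vsub q p) with (vopp (vsub p q)) by (destruct p, q; unfold vsub, vopp; simpl; f_equal; ring).
  apply unitv_vopp.
Qed.

Lemma fold_vertex n v sg i : (3 <= n)%nat -> cvx n v sg -> (forall k, D n v k <> (0,0)) ->
  PI / 2 <= int_angle n v i < PI ->
  let al := int_angle n v i in
  fold_dir n v i = vadd (vscale (sin (al/2) / vnorm (D n v i)) (D n v i))
                        (vscale (cos (al/2) / vnorm (D n v i)) (M n v sg i)) /\
  vopp (fold_dir n v i) = vadd (vscale (- sin (al/2) / vnorm (D n v (i + n - 1))) (D n v (i + n - 1)))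
                        (vscale (cos (al/2) / vnorm (D n v (i + n - 1))) (M n v sg (i + n - 1))).
Proof.
  intros Hn Hc HD Hal al.
  assert (Hsg : sg * sg = 1) by (destruct Hc as [[-> | ->] _]; lra).
  set (b := D n v i). set (p := D n v (i + n - 1)). set (a := vopp p).
  assert (Hb : b <> (0,0)) by apply HD. assert (Hp : p <> (0,0)) by apply HD.
  assert (Ha : a <> (0,0)) by (apply vopp_neq; auto).
  set (U := unitv b). set (A := unitv a).
  set (x := dot A U).
  assert (Hal' : al = acos x).
  { unfold al. rewrite int_angle_eq by lia. unfold ang. fold p a b. unfold x, A, U. rewrite dot_unitv by auto. reflexivity. }
  assert (Hcx : cos al = x).
  { unfold al. rewrite int_angle_eq by lia. fold p a b. pose proof (ang_cos a b Ha Hb).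
    unfold x, A, U. rewrite dot_unitv by auto. pose proof (vnorm_pos a Ha). pose proof (vnorm_pos b Hb).
    rewrite <- H. field. lra. }
  assert (Hx1 : x < 1).
  { rewrite <- Hcx. assert (cos al <= 0); [|lra]. apply cos_le_0; try lra.
    all: pose proof PI_RGT_0; fold al in Hal; lra. }
  assert (Hs : 0 <= sin (al / 2)) by (apply sin_ge_0; pose proof PI_RGT_0; fold al in Hal; lra).
  assert (Hc2 : 0 <= cos (al / 2)) by (apply cos_ge_0; pose proof PI_RGT_0; fold al in Hal; lra).
  assert (Hs2 : sin (al / 2) * sin (al / 2) = (1 - x) / 2).
  { rewrite <- Hcx. assert (cos al = cos (2 * (al / 2))) by (f_equal; field). rewrite H, cos_2a_sin. field. }
  assert (Hc22 : cos (al / 2) * cos (al / 2) = (1 + x) / 2).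
  { rewrite <- Hcx. assert (cos al = cos (2 * (al / 2))) by (f_equal; field). rewrite H, cos_2a_cos. field. }
  assert (Cr : sg * cross p b > 0).
  { unfold p, b. rewrite <- (D_pred_succ n v i) by lia. apply consec; auto. }
  pose proof (vnorm_pos b Hb) as Nb. pose proof (vnorm_pos a Ha) as Na.
  assert (HAN : dot A (nrm sg U) < 0).
  { unfold A, U, unitv. rewrite dot_nrm.
    assert (cross (vscale (/ vnorm b) b) (vscale (/ vnorm a) a) = (/ vnorm b * / vnorm a) * cross p b).
    { unfold a. destruct b, p. unfold cross, vscale, vopp; simpl. ring. }
    rewrite H. assert (0 < / vnorm b * / vnorm a) by (apply Rmult_lt_0_compat; apply Rinv_0_lt_compat; lra).
    nra. }
  assert (HUU : dot U U = 1) by (apply unitv_unit; auto).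
  assert (HAA : dot A A = 1) by (apply unitv_unit; auto).
  split.
  - rewrite fold_dir_eq by lia. fold b p a U A.
    rewrite (fold_decomp U A sg x (sin (al/2)) (cos (al/2))) by auto.
    unfold U, M, unitv. fold b. destruct b. unfold vadd, vscale, nrm; simpl. f_equal; field; lra.
  - rewrite fold_dir_eq by lia. fold b p a U A.
    rewrite <- unitv_vsub_swap.
    rewrite (fold_decomp A U (- sg) x (sin (al/2)) (cos (al/2))); auto.
    + unfold A, M, unitv, a. rewrite vnorm_opp. fold p. pose proof (vnorm_pos p Hp).
      destruct p. unfold vadd, vscale, nrm, vopp; simpl. f_equal; field; lra.
    + unfold x. destruct A, U; unfold dot; simpl; ring.
    + lra.
    + rewrite dot_nrm. rewrite dot_nrm in HAN. rewrite cross_anti. lra.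
Qed.


Lemma pred_mod n v k : (0 < n)%nat -> D n v ((k mod n) + n - 1) = D n v (k + n - 1).
Proof.
  intros Hn. rewrite <- (D_mod n v ((k mod n) + n - 1)), <- (D_mod n v (k + n - 1)).
  f_equal. replace ((k mod n) + n - 1)%nat with ((k mod n) + (n - 1))%nat by lia.
  replace (k + n - 1)%nat with (k + (n - 1))%nat by lia.
  apply Nat.Div0.add_mod_idemp_l.
Qed.

Lemma int_angle_mod n v k : (0 < n)%nat -> int_angle n v (k mod n) = int_angle n v k.
Proof. intros Hn. rewrite !int_angle_eq by auto. rewrite pred_mod, D_mod by auto. reflexivity. Qed.

Lemma fold_dir_mod n v k : (0 < n)%nat -> fold_dir n v (k mod n) = fold_dir n v k.
Proof. intros Hn. rewrite !fold_dir_eq by auto. rewrite pred_mod, D_mod by auto. reflexivity. Qed.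

Lemma on_fold_line_mod n v w k p : (0 < n)%nat ->
  on_fold_line n v w (k mod n) p <-> on_fold_line n v w k p.
Proof.
  intros Hn. unfold on_fold_line, fold_half.
  rewrite int_angle_mod, fold_dir_mod by auto.
  change (vtx n v (k mod n)) with (V n v (k mod n)). rewrite V_mod. reflexivity.
Qed.

Lemma M_pred_succ n v sg i : (0 < n)%nat -> M n v sg (S i + n - 1) = M n v sg i.
Proof. intros Hn. unfold M. replace (S i + n - 1)%nat with (i + n)%nat by lia. rewrite D_add_n. reflexivity. Qed.

Lemma D_pred_succ' n v i : (0 < n)%nat -> D n v (S i + n - 1) = D n v i.
Proof. intros Hn. replace (S i + n - 1)%nat with (i + n)%nat by lia. apply D_add_n. Qed.

Definition tn n v i := tan (int_angle n v i / 2).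

Lemma half_bounds al : PI / 2 <= al < PI -> 0 < cos (al / 2) /\ 0 < sin (al / 2) /\ 0 < tan (al / 2).
Proof.
  intros H. pose proof PI_RGT_0.
  assert (0 < cos (al/2)) by (apply cos_gt_0; lra).
  assert (0 < sin (al/2)) by (apply sin_gt_0; lra).
  split; [|split]; auto. unfold tan. apply Rdiv_lt_0_compat; auto.
Qed.

Lemma V_pred_D n v i : (0 < n)%nat -> V n v i = vadd (V n v (i + n - 1)) (D n v (i + n - 1)).
Proof.
  intros Hn. unfold D. replace (S (i + n - 1)) with (i + n)%nat by lia. rewrite V_add_n.
  destruct (V n v i), (V n v (i + n - 1)); unfold vadd, vsub; simpl; f_equal; ring.
Qed.

Lemma rep n v sg w i p : (3 <= n)%nat -> cvx n v sg -> (forall k, D n v k <> (0,0)) ->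
  PI / 2 <= int_angle n v i < PI -> 0 < w -> on_fold_line n v w i p ->
  (exists rho, 0 <= rho <= (w / 2) / vnorm (D n v i) /\
     p = vadd (vadd (V n v i) (vscale (rho * tn n v i) (D n v i))) (vscale rho (M n v sg i)))
  \/
  (exists rho, 0 <= rho <= (w / 2) / vnorm (D n v (i + n - 1)) /\
     p = vadd (vadd (V n v (i + n - 1)) (vscale (1 - rho * tn n v i) (D n v (i + n - 1))))
              (vscale rho (M n v sg (i + n - 1)))).
Proof.
  intros Hn Hc HD Hal Hw [tau [Ht Hp]].
  destruct (fold_vertex n v sg i Hn Hc HD Hal) as [F1 F2].
  destruct (half_bounds _ Hal) as [Hc0 [Hs0 Ht0]].
  unfold fold_half in Hp. unfold tn, tan.
  set (al := int_angle n v i) in *.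
  pose proof (vnorm_pos _ (HD i)) as Li.
  pose proof (vnorm_pos _ (HD (i + n - 1)%nat)) as Lp.
  change (vtx n v i) with (V n v i) in Hp.
  destruct (Rle_lt_dec 0 tau) as [Hpos|Hneg].
  - left. exists (tau * w / (2 * vnorm (D n v i))). split.
    + split.
      * apply Rmult_le_pos; [nra|]. apply Rlt_le, Rinv_0_lt_compat. lra.
      * assert (K : 0 < w / (2 * vnorm (D n v i))) by (apply Rdiv_lt_0_compat; lra).
        replace (tau * w / (2 * vnorm (D n v i))) with (w / (2 * vnorm (D n v i)) * tau) by (field; lra).
        replace (w / 2 / vnorm (D n v i)) with (w / (2 * vnorm (D n v i)) * 1) by (field; lra).
        nra.
    + rewrite Hp, F1. destruct (V n v i), (D n v i), (M n v sg i).
      unfold vadd, vscale; simpl. f_equal; field; lra.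
  - right. exists (- tau * w / (2 * vnorm (D n v (i + n - 1)))). split.
    + split.
      * apply Rmult_le_pos; [nra|]. apply Rlt_le, Rinv_0_lt_compat. lra.
      * assert (K : 0 < w / (2 * vnorm (D n v (i + n - 1)))) by (apply Rdiv_lt_0_compat; lra).
        replace (- tau * w / (2 * vnorm (D n v (i + n - 1)))) with (w / (2 * vnorm (D n v (i + n - 1))) * (- tau)) by (field; lra).
        replace (w / 2 / vnorm (D n v (i + n - 1))) with (w / (2 * vnorm (D n v (i + n - 1))) * 1) by (field; lra).
        nra.
    + rewrite Hp. rewrite (V_pred_D n v i) at 1 by lia.
      replace (fold_dir n v i) with (vopp (vopp (fold_dir n v i))) by apply vopp_vopp.
      rewrite F2. destruct (V n v (i + n - 1)), (D n v (i + n - 1)), (M n v sg (i + n - 1)).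
      unfold vadd, vscale, vopp; simpl. f_equal; field; lra.
Qed.


Lemma tn_mod n v k : (0 < n)%nat -> tn n v (k mod n) = tn n v k.
Proof. intros; unfold tn; rewrite int_angle_mod; auto. Qed.

Lemma distinct_V n v sg : (3 <= n)%nat -> cvx n v sg -> (forall k, D n v k <> (0,0)) ->
  forall i j, (i < n)%nat -> (j < n)%nat -> i <> j -> V n v i <> V n v j.
Proof.
  intros Hn Hc HD i j Hi Hj Hij E.
  destruct (Nat.eq_dec j (S i mod n)) as [Ej|Ej].
  - apply (HD i). unfold D. rewrite <- (V_mod n v (S i)), <- Ej, <- E.
    destruct (V n v i); unfold vsub; simpl; f_equal; ring.
  - assert (G : sg * cross (D n v i) (vsub (V n v j) (V n v i)) > 0).
    { apply cvx_gen; auto; [lia| |].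
      - rewrite !Nat.mod_small by lia. auto.
      - rewrite (Nat.mod_small j) by lia. auto. }
    rewrite E in G. unfold vsub in G. destruct (V n v j). simpl in G. unfold cross in G. simpl in G. lra.
Qed.

Lemma same_edge n v sg w : (3 <= n)%nat -> cvx n v sg -> (forall k, D n v k <> (0,0)) ->
  forall i j rho rho' p, (j = S i mod n)%nat ->
  (w / 2) * (tn n v i + tn n v j) < vnorm (D n v i) ->
  0 <= rho <= (w / 2) / vnorm (D n v i) ->
  0 <= rho' ->
  p = vadd (vadd (V n v i) (vscale (rho * tn n v i) (D n v i))) (vscale rho (M n v sg i)) ->
  p = vadd (vadd (V n v (j + n - 1)) (vscale (1 - rho' * tn n v j) (D n v (j + n - 1))))
              (vscale rho' (M n v sg (j + n - 1))) ->
  False.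
Proof.
  intros Hn Hc HD i j rho rho' p Ej Hgap Hr Hr' E1 E2.
  assert (Hsg : sg * sg = 1) by (destruct Hc as [[-> | ->] _]; lra).
  assert (Im : ((j + n - 1) mod n = i mod n)%nat).
  { rewrite Ej. replace (S i mod n + n - 1)%nat with (S i mod n + (n - 1))%nat by lia.
    rewrite Nat.Div0.add_mod_idemp_l. replace (S i + (n - 1))%nat with (i + 1 * n)%nat by lia.
    apply Nat.Div0.mod_add. }
  assert (ED : D n v (j + n - 1) = D n v i) by (rewrite <- D_mod, Im, D_mod; auto).
  assert (EV : V n v (j + n - 1) = V n v i) by (rewrite <- V_mod, Im, V_mod; auto).
  rewrite ED, EV in E2. unfold M in E1, E2. rewrite ED in E2.
  pose proof (vnorm_pos _ (HD i)) as L. pose proof (vnorm_sq (D n v i)) as L2.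
  rewrite E1 in E2. clear E1.
  set (t := tn n v i) in *. set (t' := tn n v j) in *.
  destruct (V n v i) as [x0 y0]. destruct (D n v i) as [d1 d2].
  unfold vadd, vscale, nrm, dot in *; simpl in *.
  injection E2; intros Ey Ex.
  set (A := rho * t - (1 - rho' * t')).
  assert (HA1 : A * d1 = (rho' - rho) * sg * d2) by (unfold A; lra).
  assert (HA2 : A * d2 = - ((rho' - rho) * sg * d1)) by (unfold A; lra).
  assert (Q1 : A * (d1 * d1 + d2 * d2) = 0).
  { transitivity ((A * d1) * d1 + (A * d2) * d2); [ring|]. rewrite HA1, HA2. ring. }
  assert (Q2 : (rho' - rho) * sg * (d1 * d1 + d2 * d2) = 0).
  { transitivity (((rho' - rho) * sg * d2) * d2 - (- ((rho' - rho) * sg * d1)) * d1); [ring|].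
    rewrite <- HA1, <- HA2. ring. }
  assert (P : 0 < d1 * d1 + d2 * d2) by nra.
  assert (Hsg0 : sg <> 0) by (intro; subst; lra).
  assert (R1 : rho = rho').
  { assert ((rho' - rho) * sg = 0).
    { apply (Rmult_eq_reg_r (d1 * d1 + d2 * d2)); lra. }
    apply Rmult_integral in H. destruct H; [lra|contradiction]. }
  assert (Q1' : A = 0).
  { apply (Rmult_eq_reg_r (d1 * d1 + d2 * d2)); lra. }
  assert (R2 : rho * (t + t') = 1) by (subst rho'; unfold A in Q1'; lra).
  assert (Htt : 0 < t + t').
  { destruct (Rlt_le_dec 0 (t + t')) as [h|h]; auto. nra. }
  assert (HrL : rho * vnorm (d1, d2) <= w / 2).
  { destruct Hr as [_ Hr]. apply (Rmult_le_compat_r (vnorm (d1, d2))) in Hr; [|lra].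
    replace (w / 2 / vnorm (d1, d2) * vnorm (d1, d2)) with (w / 2) in Hr by (field; lra). lra. }
  assert (vnorm (d1, d2) = (rho * vnorm (d1, d2)) * (t + t')) by (transitivity (vnorm (d1,d2) * (rho * (t + t'))); [rewrite R2; ring | ring]).
  nra.
Qed.

Lemma disjoint n v sg w : (3 <= n)%nat -> cvx n v sg -> (forall k, D n v k <> (0,0)) ->
  (forall i, (i < n)%nat -> PI / 2 <= int_angle n v i < PI) -> 0 < w ->
  (forall i, (i < n)%nat -> (w / 2) * (tn n v i + tn n v (S i mod n)) < vnorm (D n v i)) ->
  folds_disjoint n v w.
Proof.
  intros Hn Hc HD Hang Hw Hgap.
  assert (Hn0 : (0 < n)%nat) by lia.
  assert (Hang' : forall k, PI / 2 <= int_angle n v k < PI).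
  { intros k. rewrite <- int_angle_mod by auto. apply Hang, Nat.mod_upper_bound. lia. }
  assert (Htn : forall k, 0 < tn n v k).
  { intros k. unfold tn. destruct (half_bounds _ (Hang' k)) as [_ [_ h]]. auto. }
  assert (Hgap' : forall k, (w / 2) * (tn n v k + tn n v (S k)) < vnorm (D n v k)).
  { intros k. rewrite <- D_mod, <- (tn_mod n v k), <- (tn_mod n v (S k)) by auto.
    rewrite <- S_mod. apply Hgap, Nat.mod_upper_bound. lia. }
  assert (Hl1 : forall k, (w / 2) * tn n v k < vnorm (D n v k)).
  { intros k. pose proof (Hgap' k). pose proof (Htn (S k)). nra. }
  assert (Hl2 : forall k, (w / 2) * tn n v k < vnorm (D n v (k + n - 1))).
  { intros k. pose proof (Hgap' (k + n - 1)%nat). pose proof (Htn (k + n - 1)%nat).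
    replace (S (k + n - 1)) with (k + 1 * n)%nat in H by lia.
    rewrite <- (tn_mod n v (k + 1 * n)), Nat.Div0.mod_add, tn_mod in H by auto. nra. }
  assert (Lam1 : forall k rho, 0 <= rho <= (w / 2) / vnorm (D n v k) -> 0 <= rho * tn n v k <= 1).
  { intros k rho [h1 h2]. pose proof (Htn k). pose proof (Hl1 k). pose proof (vnorm_pos _ (HD k)).
    split; [nra|].
    apply (Rmult_le_compat_r (tn n v k)) in h2; [|lra].
    assert (w / 2 / vnorm (D n v k) * tn n v k <= 1); [|lra].
    apply (Rmult_le_reg_r (vnorm (D n v k))); [lra|].
    replace (w / 2 / vnorm (D n v k) * tn n v k * vnorm (D n v k)) with (w / 2 * tn n v k) by (field; lra). lra. }
  assert (Lam2 : forall k rho, 0 <= rho <= (w / 2) / vnorm (D n v (k + n - 1)) -> 0 <= 1 - rho * tn n v k <= 1).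
  { intros k rho [h1 h2]. pose proof (Htn k). pose proof (Hl2 k). pose proof (vnorm_pos _ (HD (k + n - 1)%nat)).
    split; [|nra].
    apply (Rmult_le_compat_r (tn n v k)) in h2; [|lra].
    assert (w / 2 / vnorm (D n v (k + n - 1)) * tn n v k <= 1); [|lra].
    apply (Rmult_le_reg_r (vnorm (D n v (k + n - 1)))); [lra|].
    replace (w / 2 / vnorm (D n v (k + n - 1)) * tn n v k * vnorm (D n v (k + n - 1))) with (w / 2 * tn n v k) by (field; lra). lra. }
  assert (Z1 : forall k rho p, p = vadd (vadd (V n v k) (vscale (rho * tn n v k) (D n v k))) (vscale rho (M n v sg k)) ->
     rho = 0 -> p = V n v k).
  { intros k rho p -> ->. destruct (V n v k), (D n v k), (M n v sg k). unfold vadd, vscale; simpl. f_equal; ring. }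
  assert (Z2 : forall k rho p, p = vadd (vadd (V n v (k + n - 1)) (vscale (1 - rho * tn n v k) (D n v (k + n - 1))))
              (vscale rho (M n v sg (k + n - 1))) -> rho = 0 -> p = V n v k).
  { intros k rho p -> ->. rewrite (V_pred_D n v k) by auto.
    destruct (V n v (k + n - 1)), (D n v (k + n - 1)), (M n v sg (k + n - 1)). unfold vadd, vscale; simpl. f_equal; ring. }
  assert (DV := distinct_V n v sg Hn Hc HD).
  assert (SEP := separation n v sg Hn Hc).
  assert (SE := same_edge n v sg w Hn Hc HD).
  assert (Sm : forall i j, (i < n)%nat -> (j < n)%nat -> (i mod n = (j + n - 1) mod n)%nat -> j = (S i mod n)%nat).
  { intros i j Hi Hj E. rewrite (Nat.mod_small i) in E by lia.
    destruct (mod_cases (j + n - 1) n ltac:(lia)) as [[h1 h2]|[h1 h2]];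
    destruct (mod_cases (S i) n ltac:(lia)) as [[h3 h4]|[h3 h4]]; lia. }
  intros i j Hi Hj Hij p Pi Pj.
  destruct (rep n v sg w i p Hn Hc HD (Hang' i) Hw Pi) as [[r [Hr E1]]|[r [Hr E1]]];
  destruct (rep n v sg w j p Hn Hc HD (Hang' j) Hw Pj) as [[r' [Hr' E2]]|[r' [Hr' E2]]].
  - assert (Hm : (i mod n <> j mod n)%nat) by (rewrite !Nat.mod_small; lia).
    assert (r = 0).
    { apply (SEP i j (r * tn n v i) (r' * tn n v j) r r'); [exact Hm| apply Lam1, Hr | apply Lam1, Hr' | lra | lra | rewrite <- E1, <- E2; reflexivity]. }
    assert (r' = 0).
    { apply (SEP j i (r' * tn n v j) (r * tn n v i) r' r); [intro; apply Hm; symmetry; eauto | apply Lam1, Hr' | apply Lam1, Hr | lra | lra | rewrite <- E1, <- E2; reflexivity]. }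
    apply (DV i j Hi Hj Hij). rewrite <- (Z1 i r p E1), <- (Z1 j r' p E2); auto.
  - destruct (Nat.eq_dec (i mod n) ((j + n - 1) mod n)) as [Em|Hm].
    + pose proof (Sm i j Hi Hj Em) as Ej.
      apply (SE i j r r' p Ej); auto; try lra.
      subst j. apply Hgap; auto.
    + assert (r = 0).
      { apply (SEP i (j + n - 1)%nat (r * tn n v i) (1 - r' * tn n v j) r r'); [exact Hm| apply Lam1, Hr | apply Lam2, Hr' | lra | lra | rewrite <- E1, <- E2; reflexivity]. }
      assert (r' = 0).
      { apply (SEP (j + n - 1)%nat i (1 - r' * tn n v j) (r * tn n v i) r' r); [intro; apply Hm; symmetry; eauto | apply Lam2, Hr' | apply Lam1, Hr | lra | lra | rewrite <- E1, <- E2; reflexivity]. }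
      apply (DV i j Hi Hj Hij). rewrite <- (Z1 i r p E1), <- (Z2 j r' p E2); auto.
  - destruct (Nat.eq_dec (j mod n) ((i + n - 1) mod n)) as [Em|Hm].
    + pose proof (Sm j i Hj Hi Em) as Ej.
      apply (SE j i r' r p Ej); auto; try lra.
      subst i. apply Hgap; auto.
    + assert (r = 0).
      { apply (SEP (i + n - 1)%nat j (1 - r * tn n v i) (r' * tn n v j) r r'); [intro; apply Hm; symmetry; eauto | apply Lam2, Hr | apply Lam1, Hr' | lra | lra | rewrite <- E1, <- E2; reflexivity]. }
      assert (r' = 0).
      { apply (SEP j (i + n - 1)%nat (r' * tn n v j) (1 - r * tn n v i) r' r); [exact Hm | apply Lam1, Hr' | apply Lam2, Hr | lra | lra | rewrite <- E1, <- E2; reflexivity]. }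
      apply (DV i j Hi Hj Hij). rewrite <- (Z2 i r p E1), <- (Z1 j r' p E2); auto.
  - assert (Hm : ((i + n - 1) mod n <> (j + n - 1) mod n)%nat).
    { destruct (mod_cases (i + n - 1) n ltac:(lia)) as [[h1 h2]|[h1 h2]];
      destruct (mod_cases (j + n - 1) n ltac:(lia)) as [[h3 h4]|[h3 h4]]; lia. }
    assert (r = 0).
    { apply (SEP (i + n - 1)%nat (j + n - 1)%nat (1 - r * tn n v i) (1 - r' * tn n v j) r r'); [exact Hm| apply Lam2, Hr | apply Lam2, Hr' | lra | lra | rewrite <- E1, <- E2; reflexivity]. }
    assert (r' = 0).
    { apply (SEP (j + n - 1)%nat (i + n - 1)%nat (1 - r' * tn n v j) (1 - r * tn n v i) r' r); [intro; apply Hm; symmetry; eauto | apply Lam2, Hr' | apply Lam2, Hr | lra | lra | rewrite <- E1, <- E2; reflexivity]. }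
    apply (DV i j Hi Hj Hij). rewrite <- (Z2 i r p E1), <- (Z2 j r' p E2); auto.
Qed.


Lemma angle_sum n v sg : (3 <= n)%nat -> cvx n v sg -> (forall k, D n v k <> (0,0)) ->
  sumn (fun i => int_angle n v i) n = (INR n - 2) * PI.
Proof.
  intros Hn Hc HD.
  rewrite (sumn_ext _ (fun i => PI + (-1) * ang (D n v (i + n - 1)) (D n v i))).
  2:{ intros k _. rewrite int_angle_ext by lia. ring. }
  rewrite sumn_add, sumn_const, sumn_scal, (turning n v sg Hn Hc HD). ring.
Qed.

Lemma tan_tangent y b : 0 < y < PI / 2 -> 0 < b < PI / 2 ->
  tan b + (y - b) * (1 + tan b ^ 2) <= tan y.
Proof.
  intros Hy Hb. pose proof PI_RGT_0.
  assert (Der : forall c, 0 < c < PI / 2 -> derivable_pt_lim tan c (1 + tan c ^ 2)).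
  { intros c Hc'. assert (Pr : - PI / 2 < c < PI / 2) by lra.
    apply derive_pt_eq_1 with (derivable_pt_tan c Pr). apply derive_pt_tan. }
  destruct (Rtotal_order y b) as [Hlt|[Heq|Hgt]].
  - destruct (MVT_cor2 tan (fun x => 1 + tan x ^ 2) y b Hlt) as [c [Ec Hc']].
    { intros c Hc'. apply Der. lra. }
    assert (tan c < tan b) by (apply tan_increasing; lra).
    assert (0 < tan c) by (apply tan_gt_0; lra).
    assert (tan c ^ 2 <= tan b ^ 2) by (simpl; nra).
    assert ((1 + tan c ^ 2) * (b - y) <= (1 + tan b ^ 2) * (b - y)) by nra.
    lra.
  - subst. lra.
  - destruct (MVT_cor2 tan (fun x => 1 + tan x ^ 2) b y Hgt) as [c [Ec Hc']].
    { intros c Hc'. apply Der. lra. }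
    assert (tan b < tan c) by (apply tan_increasing; lra).
    assert (0 < tan b) by (apply tan_gt_0; lra).
    assert (tan b ^ 2 <= tan c ^ 2) by (simpl; nra).
    assert ((1 + tan b ^ 2) * (y - b) <= (1 + tan c ^ 2) * (y - b)) by nra.
    lra.
Qed.

Lemma cot_eq n : (4 <= n)%nat -> tan (PI / 2 - PI / INR n) = cos (PI / INR n) / sin (PI / INR n).
Proof. intros. unfold tan. rewrite sin_shift, cos_shift. reflexivity. Qed.

Lemma b_bounds n : (4 <= n)%nat -> 0 < PI / 2 - PI / INR n < PI / 2.
Proof.
  intros Hn. pose proof PI_RGT_0. assert (4 <= INR n) by (replace 4 with (INR 4) by (simpl; lra); apply le_INR; lia).
  assert (0 < PI / INR n) by (apply Rdiv_lt_0_compat; lra).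
  assert (PI / INR n <= PI / 4).
  { apply Rmult_le_compat_l; [lra|]. apply Rinv_le_contravar; lra. }
  lra.
Qed.

Lemma jensen n v sg : (4 <= n)%nat -> cvx n v sg -> (forall k, D n v k <> (0,0)) ->
  (forall i, (i < n)%nat -> PI / 2 <= int_angle n v i < PI) ->
  INR n * (cos (PI / INR n) / sin (PI / INR n)) <= sumn (fun i => tn n v i) n.
Proof.
  intros Hn Hc HD Hang.
  set (b := PI / 2 - PI / INR n).
  pose proof (b_bounds n Hn) as Hb. fold b in Hb.
  rewrite <- cot_eq by auto. fold b.
  set (K := 1 + tan b ^ 2).
  apply Rle_trans with (sumn (fun i => tan b + (int_angle n v i / 2 - b) * K) n).
  - rewrite (sumn_ext _ (fun i => (tan b - b * K) + (/ 2 * K) * int_angle n v i)).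
    2:{ intros; field. }
    rewrite sumn_add, sumn_const, sumn_scal.
    change (sumn (int_angle n v) n) with (sumn (fun i => int_angle n v i) n).
    rewrite (angle_sum n v sg ltac:(lia) Hc HD).
    unfold b. assert (0 < INR n) by (apply lt_0_INR; lia).
    apply Req_le. field. lra.
  - apply sumn_le. intros k Hk. unfold tn. pose proof PI_RGT_0. pose proof (Hang k Hk).
    apply tan_tangent; lra.
Qed.


Lemma gap_from_ribbon n v sg w : (3 <= n)%nat -> cvx n v sg -> (forall k, D n v k <> (0,0)) ->
  (forall i, (i < n)%nat -> PI / 2 <= int_angle n v i < PI) -> folded_ribbon n v w ->
  forall i, (i < n)%nat -> (w / 2) * (tn n v i + tn n v (S i mod n)) < vnorm (D n v i).
Proof.
  intros Hn Hc HD Hang [Hw Hdis] i Hi.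
  assert (Hn0 : (0 < n)%nat) by lia.
  assert (Hang' : forall k, PI / 2 <= int_angle n v k < PI).
  { intros k. rewrite <- int_angle_mod by auto. apply Hang, Nat.mod_upper_bound. lia. }
  rewrite tn_mod by auto.
  destruct (Rlt_le_dec ((w / 2) * (tn n v i + tn n v (S i))) (vnorm (D n v i))) as [ok|Hle]; auto.
  exfalso.
  destruct (fold_vertex n v sg i Hn Hc HD (Hang' i)) as [F1 _].
  destruct (fold_vertex n v sg (S i) Hn Hc HD (Hang' (S i))) as [_ F2].
  rewrite D_pred_succ', M_pred_succ in F2 by auto.
  destruct (half_bounds _ (Hang' i)) as [c0 [s0 t0]].
  destruct (half_bounds _ (Hang' (S i))) as [c1 [s1 t1]].
  set (L := vnorm (D n v i)) in *.
  pose proof (vnorm_pos _ (HD i)) as HL. fold L in HL.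
  set (t := tn n v i) in *. set (t' := tn n v (S i)) in *.
  assert (Ht : t = sin (int_angle n v i / 2) / cos (int_angle n v i / 2)) by reflexivity.
  assert (Ht' : t' = sin (int_angle n v (S i) / 2) / cos (int_angle n v (S i) / 2)) by reflexivity.
  set (r := L / (t + t')).
  assert (Hr : 0 < r) by (apply Rdiv_lt_0_compat; unfold t, t', tn; lra).
  assert (Hr2 : r <= w / 2).
  { unfold r. apply (Rmult_le_reg_r (t + t')); [unfold t, t', tn; lra|].
    replace (L / (t + t') * (t + t')) with L by (field; unfold t, t', tn; lra). lra. }
  set (p := vadd (vadd (V n v i) (vscale (r * t / L) (D n v i))) (vscale (r / L) (M n v sg i))).
  assert (P1 : on_fold_line n v w i p).
  { exists (2 * r / w). split.
    - split; [|apply (Rmult_le_reg_r w); [lra|]; field_simplify; lra].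
      assert (0 <= 2 * r / w) by (unfold Rdiv; apply Rmult_le_pos; [lra|]; apply Rlt_le, Rinv_0_lt_compat; lra). lra.
    - unfold fold_half. change (vtx n v i) with (V n v i). rewrite F1. unfold p. rewrite Ht.
      destruct (V n v i), (D n v i), (M n v sg i). unfold vadd, vscale; simpl. f_equal; field; lra. }
  assert (P2 : on_fold_line n v w (S i) p).
  { exists (- (2 * r / w)). split.
    - split; [|assert (0 <= 2 * r / w) by (unfold Rdiv; apply Rmult_le_pos; [lra|]; apply Rlt_le, Rinv_0_lt_compat; lra); lra].
      assert (2 * r / w <= 1); [|lra]. apply (Rmult_le_reg_r w); [lra|]. field_simplify; lra.
    - unfold fold_half. change (vtx n v (S i)) with (V n v (S i)).
      replace (fold_dir n v (S i)) with (vopp (vopp (fold_dir n v (S i)))) by apply vopp_vopp.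
      rewrite F2. fold L. unfold p.
      assert (EV : V n v (S i) = vadd (V n v i) (D n v i)).
      { unfold D. destruct (V n v i), (V n v (S i)). unfold vadd, vsub; simpl. f_equal; ring. }
      rewrite EV.
      assert (Er : r * (t + t') = L) by (unfold r; field; unfold t, t', tn; lra).
      assert (Er' : r * t / L = 1 - r * t' / L).
      { assert (E3 : r * t = L - r * t') by lra.
        replace (1 - r * t' / L) with ((L - r * t') / L) by (field; lra). rewrite E3. reflexivity. }
      rewrite Er'. rewrite Ht'.
      destruct (V n v i), (D n v i), (M n v sg i). unfold vadd, vscale, vopp; simpl. f_equal; field; lra. }
  apply on_fold_line_mod in P2; auto.
  apply (Hdis i (S i mod n)%nat Hi (Nat.mod_upper_bound (S i) n ltac:(lia))) with p; auto.
  destruct (mod_cases (S i) n ltac:(lia)) as [[h1 h2]|[h1 h2]]; lia.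
Qed.


Lemma poly_len_eq n v : poly_len n v = sumn (fun k => vnorm (D n v k)) n.
Proof. unfold poly_len. rewrite fold_seq. apply sumn_ext. intros k _. reflexivity. Qed.

Lemma part1 n (Hn : (4 <= n)%nat) : forall (v : nat -> pt) (w : R),
     nondegenerate n v -> convex_polygon n v ->
     (forall i, (i < n)%nat -> PI / 2 <= int_angle n v i < PI) ->
     folded_ribbon n v w ->
     INR n * (cos (PI / INR n) / sin (PI / INR n)) <= ribbonlength n v w.
Proof.
  intros v w Hnd Hcv Hang Hfr.
  destruct (convex_cvx n v Hcv) as [sg Hc].
  assert (HD := nondeg_D n v ltac:(lia) Hnd).
  pose proof (gap_from_ribbon n v sg w ltac:(lia) Hc HD Hang Hfr) as Hgap.
  destruct Hfr as [Hw _].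
  pose proof (jensen n v sg Hn Hc HD Hang) as Hj.
  assert (Hlt : w * sumn (fun i => tn n v i) n < poly_len n v).
  { rewrite poly_len_eq.
    apply Rle_lt_trans with (sumn (fun i => (w / 2) * (tn n v i + tn n v (S i mod n))) n).
    - rewrite sumn_scal, sumn_add. rewrite (sumn_cyc (tn n v)) by lia. change (sumn (tn n v) n) with (sumn (fun i => tn n v i) n). lra.
    - apply sumn_lt; [lia|]. auto. }
  unfold ribbonlength. apply (Rmult_le_reg_r w); auto.
  replace (poly_len n v / w * w) with (poly_len n v) by (field; lra). nra.
Qed.

Lemma part3 n (Hn : (4 <= n)%nat) : forall v : nat -> pt, regular_polygon n v ->
     (forall i, (i < n)%nat -> PI / 2 <= int_angle n v i < PI) /\
     forall eps : R, 0 < eps -> exists w : R,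
       folded_ribbon n v w /\
       ribbonlength n v w < INR n * (cos (PI / INR n) / sin (PI / INR n)) + eps.
Proof.
  intros v [Hnd [Hcv Heq]].
  destruct (convex_cvx n v Hcv) as [sg Hc].
  assert (HD := nondeg_D n v ltac:(lia) Hnd).
  assert (Hn0 : (0 < INR n)) by (apply lt_0_INR; lia).
  pose proof PI_RGT_0.
  assert (Hal : forall i, (i < n)%nat -> int_angle n v i = PI - 2 * PI / INR n).
  { intros i Hi.
    pose proof (angle_sum n v sg ltac:(lia) Hc HD) as S.
    rewrite (sumn_ext _ (fun _ => int_angle n v 0)) in S.
    2:{ intros k Hk. destruct (Heq k 0%nat Hk ltac:(lia)) as [_ h]. exact h. }
    rewrite sumn_const in S.
    destruct (Heq i 0%nat Hi ltac:(lia)) as [_ h]. rewrite h.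
    apply (Rmult_eq_reg_l (INR n)); [|lra]. rewrite S. field. lra. }
  assert (H4 : 4 <= INR n) by (replace 4 with (INR 4) by (simpl; lra); apply le_INR; lia).
  assert (Hang : forall i, (i < n)%nat -> PI / 2 <= int_angle n v i < PI).
  { intros i Hi. rewrite Hal by auto. split.
    - assert (2 * PI / INR n <= PI / 2); [|lra].
      apply (Rmult_le_reg_r (INR n)); [lra|]. field_simplify; nra.
    - assert (0 < 2 * PI / INR n) by (apply Rdiv_lt_0_compat; lra). lra. }
  split; auto.
  set (cot := cos (PI / INR n) / sin (PI / INR n)).
  assert (Htn : forall i, (i < n)%nat -> tn n v i = cot).
  { intros i Hi. unfold tn. rewrite Hal by auto. unfold cot. rewrite <- cot_eq by auto. f_equal. field. lra. }
  assert (Hcot : 0 < cot).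
  { rewrite <- (Htn 0%nat) by lia. unfold tn. destruct (half_bounds _ (Hang 0%nat ltac:(lia))) as [_ [_ h]]. auto. }
  set (L := vnorm (D n v 0)).
  assert (HL : forall i, (i < n)%nat -> vnorm (D n v i) = L).
  { intros i Hi. destruct (Heq i 0%nat Hi ltac:(lia)) as [h _]. exact h. }
  assert (HL0 : 0 < L) by (apply vnorm_pos, HD).
  intros eps Heps.
  set (dl := eps / (2 * INR n)).
  assert (Hdl : 0 < dl) by (apply Rdiv_lt_0_compat; lra).
  exists (L / (cot + dl)).
  assert (Hw : 0 < L / (cot + dl)) by (apply Rdiv_lt_0_compat; lra).
  split.
  - split; auto. apply (disjoint n v sg) ; auto; try lia.
    intros i Hi. rewrite Htn by auto. rewrite Htn by (apply Nat.mod_upper_bound; lia). rewrite HL by auto.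
    replace (L / (cot + dl) / 2 * (cot + cot)) with (L * (cot / (cot + dl))) by (field; lra).
    assert (cot / (cot + dl) < 1).
    { apply (Rmult_lt_reg_r (cot + dl)); [lra|]. field_simplify; lra. }
    nra.
  - unfold ribbonlength. rewrite poly_len_eq.
    rewrite (sumn_ext _ (fun _ => L)) by (intros; apply HL; auto).
    rewrite sumn_const.
    replace (INR n * L / (L / (cot + dl))) with (INR n * cot + INR n * dl) by (field; lra).
    unfold dl. replace (INR n * (eps / (2 * INR n))) with (eps / 2) by (field; lra). lra.
Qed.


Definition th n := 2 * PI / INR n.
Definition vr n k : pt := (cos (INR k * th n), sin (INR k * th n)).

Lemma vr_mod n k : (0 < n)%nat -> vr n (k mod n) = vr n k.
Proof.
  intros Hn. unfold vr.
  assert (E : INR k * th n = INR (k mod n) * th n + 2 * INR (k / n) * PI).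
  { rewrite (Nat.div_mod_eq k n) at 1. rewrite plus_INR, mult_INR. unfold th.
    assert (0 < INR n) by (apply lt_0_INR; lia). field. lra. }
  rewrite E, cos_period, sin_period. reflexivity.
Qed.

Lemma vtx_vr n i : (0 < n)%nat -> vtx n (vr n) i = vr n i.
Proof. intros; unfold vtx; apply vr_mod; auto. Qed.

Lemma dot_vr n a b : dot (vr n a) (vr n b) = cos ((INR a - INR b) * th n).
Proof. unfold vr, dot; simpl. rewrite Rmult_minus_distr_r, cos_minus. ring. Qed.

Lemma cross_vr n a b : cross (vr n a) (vr n b) = sin ((INR b - INR a) * th n).
Proof. unfold vr, cross; simpl. rewrite Rmult_minus_distr_r, sin_minus. ring. Qed.

Lemma fpos n m : (4 <= n)%nat -> (2 <= m <= n - 1)%nat ->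
  0 < sin ((INR m - 1) * th n) + sin (th n) - sin (INR m * th n).
Proof.
  intros Hn Hm. pose proof PI_RGT_0.
  assert (Hn0 : 4 <= INR n) by (replace 4 with (INR 4) by (simpl; lra); apply le_INR; lia).
  assert (Hm2 : 2 <= INR m) by (replace 2 with (INR 2) by (simpl; lra); apply le_INR; lia).
  assert (Hm3 : INR m <= INR n - 1).
  { replace 1 with (INR 1) by reflexivity. rewrite <- minus_INR by lia. apply le_INR; lia. }
  set (u := PI / INR n).
  assert (Hu : 0 < u) by (apply Rdiv_lt_0_compat; lra).
  assert (Hu4 : u <= PI / 4).
  { unfold u. apply Rmult_le_compat_l; [lra|]. apply Rinv_le_contravar; lra. }
  assert (Hth : th n = 2 * u) by (unfold th, u; field; lra).
  set (X := (2 * INR m - 1) * u).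
  assert (E1 : (INR m - 1) * th n = X - u) by (rewrite Hth; unfold X; ring).
  assert (E2 : INR m * th n = X + u) by (rewrite Hth; unfold X; ring).
  rewrite E1, E2, Hth, sin_minus, sin_plus, sin_2a.
  replace (sin X * cos u - cos X * sin u + 2 * sin u * cos u - (sin X * cos u + cos X * sin u))
    with (2 * sin u * (cos u - cos X)) by ring.
  assert (Hsu : 0 < sin u) by (apply sin_gt_0; lra).
  assert (HX1 : u < X) by (unfold X; nra).
  assert (HXn : X = 2 * PI - (2 * INR n - 2 * INR m + 1) * u).
  { unfold X, u. field. lra. }
  assert (HX2 : 3 * u <= 2 * PI - X) by (rewrite HXn; nra).
  assert (cos X < cos u).
  { destruct (Rle_lt_dec X PI) as [h|h].
    - apply cos_decreasing_1; lra.
    - replace (cos X) with (cos (2 * PI - X)).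
      + apply cos_decreasing_1; lra.
      + rewrite cos_minus, cos_2PI, sin_2PI. ring. }
  nra.
Qed.

Lemma cross_sub3 a b c : cross (vsub a b) (vsub c b) = cross a c - cross a b - cross b c.
Proof. destruct a, b, c; unfold cross, vsub; simpl; ring. Qed.

Lemma dot_sub4 a b c d : dot (vsub a b) (vsub c d) = dot a c - dot a d - dot b c + dot b d.
Proof. destruct a, b, c, d; unfold dot, vsub; simpl; ring. Qed.

Lemma sin_m2pi x : sin (x - 2 * PI) = sin x.
Proof. rewrite <- (sin_period (x - 2 * PI) 1). f_equal. simpl. ring. Qed.

Lemma vr_convex n : (4 <= n)%nat -> convex_polygon n (vr n).
Proof.
  intros Hn. exists 1. split; [left; reflexivity|].
  intros i j Hi Hj H1 H2.
  unfold nxt. rewrite !vtx_vr by lia.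
  rewrite cross_sub3, !cross_vr. rewrite S_INR.
  assert (Hn0 : 0 < INR n) by (apply lt_0_INR; lia).
  assert (Eth : INR n * th n = 2 * PI) by (unfold th; field; lra).
  assert (Hs : sin ((INR i - (INR i + 1)) * th n) = - sin (th n)).
  { replace ((INR i - (INR i + 1)) * th n) with (- th n) by ring. apply sin_neg. }
  rewrite Hs.
  destruct (Nat.lt_ge_cases i j) as [hij|hij].
  - set (m := (j - i)%nat).
    assert (Hm : (2 <= m <= n - 1)%nat).
    { unfold m. destruct (mod_cases (S i) n ltac:(lia)) as [[h3 h4]|[h3 h4]]; lia. }
    assert (Em : INR j - INR i = INR m) by (unfold m; rewrite minus_INR by lia; ring).
    pose proof (fpos n m Hn Hm).
    replace ((INR j - (INR i + 1)) * th n) with ((INR m - 1) * th n) by (rewrite <- Em; ring).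
    rewrite Em. lra.
  - set (m := (j + n - i)%nat).
    assert (Hm : (2 <= m <= n - 1)%nat).
    { unfold m. destruct (mod_cases (S i) n ltac:(lia)) as [[h3 h4]|[h3 h4]]; lia. }
    assert (Em : INR j - INR i = INR m - INR n).
    { unfold m. rewrite minus_INR by lia. rewrite plus_INR. ring. }
    pose proof (fpos n m Hn Hm).
    replace ((INR j - (INR i + 1)) * th n) with ((INR m - 1) * th n - 2 * PI) by (rewrite <- Eth; rewrite <- (Rplus_0_r (INR j)); nra).
    replace ((INR j - INR i) * th n) with (INR m * th n - 2 * PI) by (rewrite Em; rewrite <- Eth; ring).
    rewrite !sin_m2pi. lra.
Qed.

Lemma nondeg_from n v : (3 <= n)%nat -> convex_polygon n v ->
  (forall i, (i < n)%nat -> nxt n v i <> vtx n v i) -> nondegenerate n v.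
Proof.
  intros Hn Hcv Hne i Hi. split; auto.
  destruct (convex_cvx n v Hcv) as [sg Hc].
  pose proof (consec n v sg Hn Hc (i + n - 1)) as C.
  rewrite D_pred_succ in C by lia.
  assert (E : vsub (vtx n v i) (prv n v i) = D n v (i + n - 1)).
  { unfold D, prv. replace (S (i + n - 1)) with (i + n)%nat by lia. rewrite V_add_n. reflexivity. }
  rewrite E. change (vsub (nxt n v i) (vtx n v i)) with (D n v i).
  intros Z. rewrite Z in C. lra.
Qed.

Lemma INR_pred_n i n : (1 <= n)%nat -> INR (i + n - 1) = INR i + INR n - 1.
Proof. intros. replace (i + n - 1)%nat with (i + (n - 1))%nat by lia. rewrite plus_INR, minus_INR by lia. simpl. ring. Qed.

Lemma vr_regular n : (4 <= n)%nat -> regular_polygon n (vr n).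
Proof.
  intros Hn.
  assert (Hn0 : 0 < INR n) by (apply lt_0_INR; lia).
  assert (Hcv := vr_convex n Hn).
  assert (Side : forall i, (i < n)%nat -> dot (vsub (nxt n (vr n) i) (vtx n (vr n) i)) (vsub (nxt n (vr n) i) (vtx n (vr n) i)) = 2 - 2 * cos (th n)).
  { intros i Hi. unfold nxt. rewrite !vtx_vr by lia. rewrite dot_sub4, !dot_vr, S_INR.
    replace ((INR i + 1 - (INR i + 1)) * th n) with 0 by ring.
    replace ((INR i + 1 - INR i) * th n) with (th n) by ring.
    replace ((INR i - (INR i + 1)) * th n) with (- th n) by ring.
    replace ((INR i - INR i) * th n) with 0 by ring. rewrite cos_0, cos_neg. ring. }
  assert (Hcth : cos (th n) < 1).
  { rewrite <- cos_0. pose proof PI_RGT_0.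
    assert (4 <= INR n) by (replace 4 with (INR 4) by (simpl; lra); apply le_INR; lia).
    assert (0 < th n) by (unfold th; apply Rdiv_lt_0_compat; lra).
    assert (th n <= PI).
    { unfold th. apply (Rmult_le_reg_r (INR n)); [lra|]. field_simplify; nra. }
    apply cos_decreasing_1; lra. }
  assert (Hnd : nondegenerate n (vr n)).
  { apply nondeg_from; auto; [lia|]. intros i Hi E.
    pose proof (Side i Hi). rewrite E in H. unfold vsub, dot in H. simpl in H. lra. }
  split; auto. split; auto.
  assert (Ang : forall i, (i < n)%nat -> int_angle n (vr n) i =
     acos ((cos ((INR n - 2) * th n) - cos ((INR n - 1) * th n) - cos (th n) + 1) /
           (sqrt (2 - 2 * cos ((INR n - 1) * th n)) * sqrt (2 - 2 * cos (th n))))).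
  { intros i Hi. unfold int_angle, prv, nxt, vnorm. cbv zeta. rewrite !vtx_vr by lia.
    rewrite !dot_sub4, !dot_vr, S_INR, INR_pred_n by lia.
    replace ((INR i + INR n - 1 - (INR i + 1)) * th n) with ((INR n - 2) * th n) by ring.
    replace ((INR i + INR n - 1 - INR i) * th n) with ((INR n - 1) * th n) by ring.
    replace ((INR i - (INR i + 1)) * th n) with (- th n) by ring.
    replace ((INR i - INR i) * th n) with 0 by ring.
    replace ((INR i + INR n - 1 - (INR i + INR n - 1)) * th n) with 0 by ring.
    replace ((INR i - (INR i + INR n - 1)) * th n) with (- ((INR n - 1) * th n)) by ring.
    replace ((INR i + 1 - (INR i + 1)) * th n) with 0 by ring.
    replace ((INR i + 1 - INR i) * th n) with (th n) by ring.
    rewrite !cos_0, !cos_neg. f_equal. f_equal. f_equal; f_equal; ring. }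
  intros i j Hi Hj. split.
  - unfold vnorm. rewrite !Side by auto. reflexivity.
  - rewrite !Ang by auto. reflexivity.
Qed.


Theorem theorem6p5 (n : nat) (Hn : (4 <= n)%nat) :
  (forall (v : nat -> pt) (w : R),
     nondegenerate n v -> convex_polygon n v ->
     (forall i, (i < n)%nat -> PI / 2 <= int_angle n v i < PI) ->
     folded_ribbon n v w ->
     INR n * (cos (PI / INR n) / sin (PI / INR n)) <= ribbonlength n v w) /\
  (exists v : nat -> pt, regular_polygon n v) /\
  (forall v : nat -> pt, regular_polygon n v ->
     (forall i, (i < n)%nat -> PI / 2 <= int_angle n v i < PI) /\
     forall eps : R, 0 < eps -> exists w : R,
       folded_ribbon n v w /\
       ribbonlength n v w < INR n * (cos (PI / INR n) / sin (PI / INR n)) + eps).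
Proof.
  split; [apply part1; auto|].
  split; [exists (vr n); apply vr_regular; auto|].
  apply part3; auto.
Qed.
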